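(* Assume $|p_1|=\Gamma_{\mathrm{rel}}\ell$ and $g[\![\rho]\!]-\Gamma_{\mathrm{rel}}^2\coth(p_1/\Gamma_{\mathrm{rel}})<0$, and let $\lambda^*>0$ be the unique solution of $g[\![\rho]\!]=\Gamma_{\mathrm{rel}}^2\coth(p_1/\Gamma_{\mathrm{rel}})-\lambda^2\coth((p_1-p_0)/\lambda)$. Then the null space of the linear operator $\mathcal L_{\lambda^*}:X\to Y$ is one-dimensional.
   Context: Constants $g>0$, $\ell>0$, $p_0<p_1<0$, $[\![\rho]\!]<0$, $\Gamma_{\mathrm{rel}}>0$. Period $2\pi$ in $q$. $D_1=\{(q,p):p_1<p<0\}$, $D_2=\{(q,p):p_0<p<p_1\}$, $D=D_1\cup D_2$, $I=\{p=p_1\}$, $T=\{p=0\}$; $f^{(i)}=f|_{D_i}$, $[\![f]\!]=f^{(1)}|_I-f^{(2)}|_I$. $C^{k+\alpha}_{\mathrm{per}}$ means $C^{k+\alpha}$, $2\pi$-periodic and even in $q$; $d(\varphi)=\frac1{2\pi}\int_{-\pi}^\pi\varphi(q,p_1)dq$. $X=\{\varphi\in C^{2+\alpha}_{\mathrm{per}}(\overline D\setminus I)\cap C^{\alpha}_{\mathrm{per}}(\overline D):\varphi|_{p=p_0}=0,\ \varphi^{(i)}\in C^{1+\alpha}_{\mathrm{per}}(\overline{D_i})\}$, $Y=Y_1\times Y_2\times Y_3\times Y_4$ with $Y_1=C^{2+\alpha}_{\mathrm{per}}(\overline{D_1}\setminus I)\cap C^\alpha_{\mathrm{per}}(\overline{D_1})$,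 $Y_2=C^{2+\alpha}_{\mathrm{per}}(\overline{D_2}\setminus I)\cap C^\alpha_{\mathrm{per}}(\overline{D_2})$, $Y_3=C^\alpha_{\mathrm{per}}(I)$, $Y_4=C^{2+\alpha}_{\mathrm{per}}(T)$. For $\lambda>0$ let $H_p=1/\Gamma_{\mathrm{rel}}$ on $D_1$, $H_p=1/\lambda$ on $D_2$ (derivative of the laminar solution), and let $\mathcal L_\lambda$ (the Fréchet derivative at $w=0$ of the height-equation operator linearized about the laminar flow) be $\mathcal L_\lambda\varphi=\big((\partial_p^2+H_p^2\partial_q^2)\varphi^{(1)},\ (\partial_p^2+H_p^2\partial_q^2)\varphi^{(2)},\ 2[\![H_p^{-3}\varphi_p]\!]-2g[\![\rho]\!]\varphi|_I,\ (\varphi-d(\varphi))|_T\big)$. *)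

(* Defs.v *)
From Stdlib Require Export Reals.
From Coquelicot Require Export Coquelicot.
Open Scope R_scope.

Definition coth (x : R) : R := cosh x / sinh x.

(* partial derivatives (meaningful where they exist) *)
Definition Dq (f : R -> R -> R) : R -> R -> R :=
  fun q p => Derive (fun x => f x p) q.
Definition Dp (f : R -> R -> R) : R -> R -> R :=
  fun q p => Derive (fun y => f q y) p.

Definition closed_strip (a b : R) (q p : R) : Prop := a <= p <= b.
Definition open_strip (a b : R) (q p : R) : Prop := a < p < b.

Definition holder (alpha : R) (S : R -> R -> Prop) (u : R -> R -> R) : Prop :=
  (exists M, forall q p, S q p -> Rabs (u q p) <= M) /\
  (exists C, forall qa pa qb pb, S qa pa -> S qb pb -> (qa, pa) <> (qb, pb) ->
     Rabs (u qa pa - u qb pb)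
       <= C * Rpower (sqrt ((qa - qb) ^ 2 + (pa - pb) ^ 2)) alpha).

Definition diff_on (S : R -> R -> Prop) (f : R -> R -> R) : Prop :=
  forall q p, S q p -> ex_derive (fun x => f x p) q /\ ex_derive (fun y => f q y) p.

(* C^{1+alpha} on the closed strip a <= p <= b: f is C^alpha up to the boundary,
   and its first partial derivatives (in the interior) are uniformly C^alpha,
   hence extend C^alpha up to the boundary *)
Definition C1alpha (alpha a b : R) (f : R -> R -> R) : Prop :=
  holder alpha (closed_strip a b) f /\
  diff_on (open_strip a b) f /\
  holder alpha (open_strip a b) (Dq f) /\
  holder alpha (open_strip a b) (Dp f).

Definition C2alpha (alpha a b : R) (f : R -> R -> R) : Prop :=
  C1alpha alpha a b f /\
  diff_on (open_strip a b) (Dq f) /\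
  diff_on (open_strip a b) (Dp f) /\
  holder alpha (open_strip a b) (Dq (Dq f)) /\
  holder alpha (open_strip a b) (Dp (Dq f)) /\
  holder alpha (open_strip a b) (Dq (Dp f)) /\
  holder alpha (open_strip a b) (Dp (Dp f)).

Definition per_even (a b : R) (f : R -> R -> R) : Prop :=
  forall q p, a <= p <= b -> f (q + 2 * PI) p = f q p /\ f (- q) p = f q p.

(* The space X (D = {p0 < p < 0} minus I = {p = p1}).
   C^{2+alpha}_per(Dbar \ I) is read locally up to I: C^{2+alpha} on every closed
   strip of Dbar at positive distance from I. *)
Definition in_X (alpha p0 p1 : R) (phi : R -> R -> R) : Prop :=
  per_even p0 0 phi /\
  holder alpha (closed_strip p0 0) phi /\
  (forall d, 0 < d -> C2alpha alpha p0 (p1 - d) phi /\ C2alpha alpha (p1 + d) 0 phi) /\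
  (forall q, phi q p0 = 0) /\
  C1alpha alpha p1 0 phi /\
  C1alpha alpha p0 p1 phi.

Definition dmean (p1 : R) (phi : R -> R -> R) : R :=
  / (2 * PI) * RInt (fun q => phi q p1) (- PI) PI.

(* phi lies in the null space of L_lambda : X -> Y.
   H_p = 1/Gam on D1, 1/lam on D2.  The traces phi_p^{(i)}|_I are the one-sided
   limits of phi_p at p = p1 (they exist for phi in X). *)
Definition in_kernel (alpha g p0 p1 jrho Gam lam : R) (phi : R -> R -> R) : Prop :=
  let Hp1 := / Gam in
  let Hp2 := / lam in
  in_X alpha p0 p1 phi /\
  (forall q p, p1 < p < 0 -> Dp (Dp phi) q p + Hp1 ^ 2 * Dq (Dq phi) q p = 0) /\
  (forall q p, p0 < p < p1 -> Dp (Dp phi) q p + Hp2 ^ 2 * Dq (Dq phi) q p = 0) /\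
  (forall q, exists L1 L2,
      filterlim (fun p => Dp phi q p) (at_right p1) (locally L1) /\
      filterlim (fun p => Dp phi q p) (at_left p1) (locally L2) /\
      2 * (/ Hp1 ^ 3 * L1 - / Hp2 ^ 3 * L2) - 2 * g * jrho * phi q p1 = 0) /\
  (forall q, phi q 0 - dmean p1 phi = 0).

(* Main.v *)
Require Import Defs.
From Stdlib Require Import Reals Lra Lia Psatz ZArith.
From Coquelicot Require Import Coquelicot.
Open Scope R_scope.

Lemma cosh2_sinh2 x : cosh x * cosh x - sinh x * sinh x = 1.
Proof. unfold cosh, sinh. rewrite exp_Ropp. assert (H:=exp_pos x). field. lra. Qed.

Lemma sinh_plus x y : sinh (x+y) = sinh x * cosh y + cosh x * sinh y.
Proof. unfold cosh, sinh. rewrite Ropp_plus_distr, !exp_plus, !exp_Ropp.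
  assert (H:=exp_pos x). assert (H':=exp_pos y). field. lra. Qed.

Lemma cosh_plus x y : cosh (x+y) = cosh x * cosh y + sinh x * sinh y.
Proof. unfold cosh, sinh. rewrite Ropp_plus_distr, !exp_plus, !exp_Ropp.
  assert (H:=exp_pos x). assert (H':=exp_pos y). field. lra. Qed.

Lemma sinh_pos x : 0 < x -> 0 < sinh x.
Proof. intros. rewrite <- sinh_0. now apply sinh_lt. Qed.

Lemma sinh_nonneg x : 0 <= x -> 0 <= sinh x.
Proof. intros [H|H]. apply Rlt_le, sinh_pos; auto. subst. rewrite sinh_0; lra. Qed.

Lemma cosh_pos x : 0 < cosh x.
Proof. unfold cosh. assert (H:=exp_pos x). assert (H':=exp_pos (-x)). lra. Qed.

Lemma sinh_opp x : sinh (-x) = - sinh x.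
Proof. unfold sinh. rewrite Ropp_involutive. field. Qed.

Lemma cosh_opp x : cosh (-x) = cosh x.
Proof. unfold cosh. rewrite Ropp_involutive. field. Qed.

Lemma is_derive_sinh x : is_derive sinh x (cosh x).
Proof. apply is_derive_Reals, derivable_pt_lim_sinh. Qed.
Lemma is_derive_cosh x : is_derive cosh x (sinh x).
Proof. apply is_derive_Reals, derivable_pt_lim_cosh. Qed.

Lemma is_derive_sinh_lin m c y : is_derive (fun t => sinh (m*t+c)) y (m * cosh (m*y+c)).
Proof.
  apply (is_derive_comp sinh (fun t => m*t+c)).
  - apply is_derive_sinh.
  - evar (l:R). replace m with l. auto_derive. auto. unfold l. ring. unfold l; reflexivity.
Qed.
Lemma is_derive_cosh_lin m c y : is_derive (fun t => cosh (m*t+c)) y (m * sinh (m*y+c)).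
Proof.
  apply (is_derive_comp cosh (fun t => m*t+c)).
  - apply is_derive_cosh.
  - evar (l:R). replace m with l. auto_derive. auto. unfold l. ring. unfold l; reflexivity.
Qed.

Lemma sinh_mul_step (m x : R) : 0 < x -> 1 <= m ->
  sinh (m*x) * cosh x <= m * cosh (m*x) * sinh x ->
  sinh ((m+1)*x) * cosh x < (m+1) * cosh ((m+1)*x) * sinh x.
Proof.
  intros Hx Hm IH.
  replace ((m+1)*x) with (m*x + x) by ring.
  rewrite sinh_plus, cosh_plus.
  assert (Hs := sinh_pos x Hx). assert (Hsm := sinh_pos (m*x) ltac:(nra)).
  assert (Hc := cosh_pos x). assert (Hcm := cosh_pos (m*x)).
  assert (H1: sinh (m*x) * cosh x * cosh x <= m * cosh (m*x) * sinh x * cosh x) by nra.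
  assert (H2: 0 < (m+1) * sinh (m*x) * sinh x * sinh x).
  { apply Rmult_lt_0_compat; [apply Rmult_lt_0_compat|]; try lra. apply Rmult_lt_0_compat; lra. }
  nra.
Qed.

Lemma sinh_mul_le (n : nat) (x : R) : 0 < x -> (1 <= n)%nat ->
  sinh (INR n*x) * cosh x <= INR n * cosh (INR n*x) * sinh x.
Proof.
  intros Hx Hn. induction n as [|n IH]. lia.
  destruct (Nat.eq_dec n 0) as [->|Hn0].
  - simpl. rewrite !Rmult_1_l. assert (H:= cosh_pos x). lra.
  - rewrite S_INR. apply Rlt_le, sinh_mul_step; auto.
    apply (le_INR 1); lia. apply IH; lia.
Qed.

Lemma sinh_mul_lt (n : nat) (x : R) : 0 < x -> (2 <= n)%nat ->
  sinh (INR n*x) * cosh x < INR n * cosh (INR n*x) * sinh x.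
Proof.
  intros Hx Hn. destruct n as [|n]. lia. rewrite S_INR. apply sinh_mul_step; auto.
  apply (le_INR 1); lia. apply sinh_mul_le; auto; lia.
Qed.

Lemma sinh_le_xcosh v : 0 < v -> sinh v <= v * cosh v.
Proof.
  intros Hv.
  destruct (MVT_gen (fun t => t * cosh t - sinh t) 0 v (fun t => t * sinh t)) as [c [Hc Heq]].
  - intros t _. evar (l:R). replace (t * sinh t) with l.
    apply (is_derive_minus (fun t => t * cosh t) sinh).
    apply (is_derive_mult (fun t => t) cosh). apply is_derive_id. apply is_derive_cosh.
    intros; apply Rmult_comm. apply is_derive_sinh.
    unfold l. simpl. unfold minus, plus, opp, mult; simpl. unfold one; simpl. ring.
  - intros t _. apply continuity_pt_minus. apply continuity_pt_mult.
    apply continuity_pt_id. apply derivable_continuous_pt, derivable_pt_cosh.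
    apply derivable_continuous_pt, derivable_pt_sinh.
  - rewrite Rmin_left, Rmax_right in Hc by lra.
    simpl in Heq. rewrite Rmult_0_l, sinh_0 in Heq.
    assert (0 <= c * sinh c) by (apply Rmult_le_pos; [lra| apply sinh_nonneg; lra]).
    assert (0 <= c * sinh c * (v - 0)) by (apply Rmult_le_pos; lra). lra.
Qed.

Lemma Rpower_pos x a : 0 < Rpower x a.
Proof. unfold Rpower. apply exp_pos. Qed.

Lemma Rpower_small (al K eps : R) : 0 < al -> 0 < eps ->
  exists del, 0 < del /\ forall r, 0 < r -> r < del -> Rabs K * Rpower r al < eps.
Proof.
  intros Hal He. set (K1 := Rabs K + 1).
  assert (HK1 : 0 < K1) by (unfold K1; assert (H:=Rabs_pos K); lra).
  exists (Rpower (eps / K1) (/ al)). split. apply Rpower_pos.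
  intros r Hr Hrd.
  assert (H1 : Rpower r al < Rpower (Rpower (eps / K1) (/ al)) al).
  { apply Rlt_Rpower_l; auto. }
  rewrite Rpower_mult, Rinv_l, Rpower_1 in H1 by (try lra; apply Rdiv_lt_0_compat; lra).
  assert (H2 := Rpower_pos r al).
  apply Rle_lt_trans with (K1 * Rpower r al).
  apply Rmult_le_compat_r; unfold K1; lra.
  apply Rmult_lt_compat_l with (r:=K1) in H1; auto.
  replace (K1 * (eps / K1)) with eps in H1 by (field; lra). lra.
Qed.

Definition dst (qa pa qb pb : R) := sqrt ((qa - qb) ^ 2 + (pa - pb) ^ 2).

Lemma dst_le qa pa qb pb : dst qa pa qb pb <= Rabs (qa - qb) + Rabs (pa - pb).
Proof.
  unfold dst. rewrite <- (sqrt_Rsqr (Rabs (qa - qb) + Rabs (pa - pb))).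
  2: { assert (H1:=Rabs_pos (qa-qb)); assert (H2:=Rabs_pos (pa-pb)); lra. }
  apply sqrt_le_1_alt. unfold Rsqr.
  assert (H1:=Rabs_pos (qa-qb)); assert (H2:=Rabs_pos (pa-pb)).
  replace ((qa - qb) ^ 2) with (Rabs (qa-qb) * Rabs (qa-qb)).
  replace ((pa - pb) ^ 2) with (Rabs (pa-pb) * Rabs (pa-pb)).
  nra.
  - rewrite <- Rabs_mult, Rabs_right. ring. apply Rle_ge; apply Rle_0_sqr.
  - rewrite <- Rabs_mult, Rabs_right. ring. apply Rle_ge; apply Rle_0_sqr.
Qed.

Lemma dst_q qa qb p : dst qa p qb p = Rabs (qa - qb).
Proof. unfold dst. replace ((qa - qb) ^ 2 + (p - p) ^ 2) with (Rsqr (qa - qb)) by (unfold Rsqr; ring).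
  apply sqrt_Rsqr_abs. Qed.
Lemma dst_p q pa pb : dst q pa q pb = Rabs (pa - pb).
Proof. unfold dst. replace ((q - q) ^ 2 + (pa - pb) ^ 2) with (Rsqr (pa - pb)) by (unfold Rsqr; ring).
  apply sqrt_Rsqr_abs. Qed.

Lemma dst_pos qa pa qb pb : (qa, pa) <> (qb, pb) -> 0 < dst qa pa qb pb.
Proof.
  intros H. unfold dst. apply sqrt_lt_R0.
  destruct (Req_dec qa qb) as [->|Hq].
  - assert (pa - pb <> 0) by (intro; apply H; f_equal; lra).
    assert (0 < (pa - pb)^2) by (simpl; rewrite Rmult_1_r; apply Rsqr_pos_lt; auto).
    assert (0 <= (qb - qb)^2) by (apply pow2_ge_0). lra.
  - assert (qa - qb <> 0) by lra.
    assert (0 < (qa - qb)^2) by (simpl; rewrite Rmult_1_r; apply Rsqr_pos_lt; auto).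
    assert (0 <= (pa - pb)^2) by (apply pow2_ge_0). lra.
Qed.

Lemma holder_sub al (S S' : R -> R -> Prop) u :
  (forall q p, S q p -> S' q p) -> holder al S' u -> holder al S u.
Proof.
  intros HS [[M HM] [C HC]]. split. exists M; auto.
  exists C; intros; apply HC; auto.
Qed.

Lemma holder_bound al S u : holder al S u -> exists M, forall q p, S q p -> Rabs (u q p) <= M.
Proof. intros [H _]; exact H. Qed.

Lemma holder_p al S u : holder al S u ->
  exists C, forall q pa pb, S q pa -> S q pb -> pa <> pb ->
    Rabs (u q pa - u q pb) <= C * Rpower (Rabs (pa - pb)) al.
Proof.
  intros [_ [C HC]]. exists C. intros q pa pb H1 H2 H3.
  rewrite <- (dst_p q pa pb). apply HC; auto. intro E; inversion E; auto.
Qed.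

Lemma holder_cont_q al (S : R -> R -> Prop) u p : 0 < al -> holder al S u ->
  (forall x, S x p) -> forall q, continuous (fun x => u x p) q.
Proof.
  intros Hal [_ [C HC]] HS q. apply continuity_pt_filterlim.
  intros eps Heps.
  destruct (Rpower_small al C eps Hal Heps) as [del [Hdel Hd]].
  exists del; split; auto. intros x [[_ Hxq] Hdx]. simpl in *. unfold R_dist in *.
  apply Rle_lt_trans with (C * Rpower (dst x p q p) al).
  apply HC; auto. intro E; inversion E; auto.
  rewrite dst_q. apply Rle_lt_trans with (Rabs C * Rpower (Rabs (x - q)) al).
  apply Rmult_le_compat_r. apply Rlt_le, Rpower_pos. apply Rle_abs.
  apply Hd; auto. apply Rabs_pos_lt. lra.
Qed.

Lemma holder_cont_2d al a b u q p : 0 < al -> holder al (open_strip a b) u ->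
  a < p < b -> continuity_2d_pt u q p.
Proof.
  intros Hal [_ [C HC]] Hp eps.
  destruct (Rpower_small al C eps Hal (cond_pos eps)) as [del [Hdel Hd]].
  assert (Hm : 0 < Rmin (del/2) (Rmin (p - a) (b - p))).
  { repeat apply Rmin_pos; lra. }
  exists (mkposreal _ Hm). simpl. intros x y Hx Hy.
  assert (Hm1 := Rmin_l (del/2) (Rmin (p - a) (b - p))).
  assert (Hm2 := Rmin_r (del/2) (Rmin (p - a) (b - p))).
  assert (Hm3 := Rmin_l (p - a) (b - p)). assert (Hm4 := Rmin_r (p - a) (b - p)).
  destruct (Req_dec x q) as [->|Hxq]; [destruct (Req_dec y p) as [->|Hyp]|].
  - rewrite Rminus_eq_0, Rabs_R0. apply cond_pos.
  - assert (Hne : (q, y) <> (q, p)) by (intro E; inversion E; auto).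
    apply Rle_lt_trans with (C * Rpower (dst q y q p) al).
    apply HC; unfold open_strip; auto. apply Rabs_def2 in Hy. lra.
    apply Rle_lt_trans with (Rabs C * Rpower (dst q y q p) al).
    apply Rmult_le_compat_r. apply Rlt_le, Rpower_pos. apply Rle_abs.
    apply Hd. apply dst_pos; auto. apply Rle_lt_trans with (1 := dst_le _ _ _ _).
    rewrite Rminus_eq_0, Rabs_R0. lra.
  - assert (Hne : (x, y) <> (q, p)) by (intro E; inversion E; auto).
    apply Rle_lt_trans with (C * Rpower (dst x y q p) al).
    apply HC; unfold open_strip; auto. apply Rabs_def2 in Hy. lra.
    apply Rle_lt_trans with (Rabs C * Rpower (dst x y q p) al).
    apply Rmult_le_compat_r. apply Rlt_le, Rpower_pos. apply Rle_abs.
    apply Hd. apply dst_pos; auto. apply Rle_lt_trans with (1 := dst_le _ _ _ _).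
    lra.
Qed.

Lemma continuity_2d_cont_q u q p : continuity_2d_pt u q p -> continuous (fun x => u x p) q.
Proof.
  intros H. apply continuity_pt_filterlim. intros eps Heps.
  destruct (H (mkposreal eps Heps)) as [d Hd]. exists d; split. apply cond_pos.
  intros x [_ Hx]. simpl in *. unfold R_dist in *. apply Hd; auto.
  rewrite Rminus_eq_0, Rabs_R0. apply cond_pos.
Qed.

Lemma lip_holder al (S : R -> R -> Prop) u M L : 0 < al < 1 ->
  (forall q p, S q p -> Rabs (u q p) <= M) ->
  (forall qa pa qb pb, S qa pa -> S qb pb -> Rabs (u qa pa - u qb pb) <= L * dst qa pa qb pb) ->
  holder al S u.
Proof.
  intros Hal HM HL. split. exists M; auto.
  exists (Rabs L + 2 * Rabs M). intros qa pa qb pb Ha Hb Hne.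
  fold (dst qa pa qb pb). set (d := dst qa pa qb pb).
  assert (Hd : 0 < d) by (apply dst_pos; auto).
  assert (HR := Rpower_pos d al). assert (HL0 := Rabs_pos L). assert (HM0 := Rabs_pos M).
  destruct (Rle_dec d 1) as [Hd1|Hd1].
  - assert (d <= Rpower d al).
    { assert (H1 : Rpower (/ d) al <= Rpower (/ d) 1).
      { apply Rle_Rpower. rewrite <- Rinv_1. apply Rinv_le_contravar; lra. lra. }
      rewrite Rpower_1 in H1 by (apply Rinv_0_lt_compat; lra).
      unfold Rpower in H1. rewrite ln_Rinv in H1 by lra.
      replace (al * - ln d) with (- (al * ln d)) in H1 by ring. rewrite exp_Ropp in H1.
      fold (Rpower d al) in H1.
      apply Rinv_le_contravar in H1. rewrite !Rinv_inv in H1. lra.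
      apply Rinv_0_lt_compat; lra. }
    apply Rle_trans with (L * d). apply HL; auto.
    apply Rle_trans with (Rabs L * d). apply Rmult_le_compat_r; [lra| apply Rle_abs].
    assert (Rabs L * d <= Rabs L * Rpower d al) by (apply Rmult_le_compat_l; lra).
    nra.
  - assert (1 <= Rpower d al).
    { rewrite <- (Rpower_O d) by lra. apply Rle_Rpower; lra. }
    apply Rle_trans with (Rabs (u qa pa) + Rabs (u qb pb)).
    unfold Rminus. rewrite <- (Rabs_Ropp (u qb pb)). apply Rabs_triang.
    assert (H1 := HM _ _ Ha). assert (H2 := HM _ _ Hb).
    assert (M <= Rabs M) by apply Rle_abs.
    assert (2 * Rabs M <= 2 * Rabs M * Rpower d al) by nra. nra.
Qed.

Lemma cont_eps (F : R -> R) x0 : continuous F x0 ->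
  forall eps, 0 < eps -> exists del, 0 < del /\ forall p, Rabs (p - x0) < del -> Rabs (F p - F x0) < eps.
Proof.
  intros HF eps He. apply continuity_pt_filterlim in HF.
  destruct (HF eps He) as [d [Hd H]]. exists d; split; auto.
  intros p Hp. destruct (Req_dec p x0) as [->|Hne].
  rewrite Rminus_eq_0, Rabs_R0; auto.
  apply (H p). split. split. exact I. auto. exact Hp.
Qed.

Lemma exists_near a b x0 del : a < b -> a <= x0 <= b -> 0 < del ->
  exists p, a < p < b /\ Rabs (p - x0) < del.
Proof.
  intros Hab Hx Hd.
  destruct (Rlt_dec x0 ((a+b)/2)) as [H|H].
  - exists (x0 + Rmin del (b - x0) / 2).
    assert (H1 := Rmin_l del (b - x0)). assert (H2 := Rmin_r del (b - x0)).
    assert (0 < Rmin del (b - x0)) by (apply Rmin_pos; lra).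
    split. lra. rewrite Rabs_right; lra.
  - exists (x0 - Rmin del (x0 - a) / 2).
    assert (H1 := Rmin_l del (x0 - a)). assert (H2 := Rmin_r del (x0 - a)).
    assert (0 < Rmin del (x0 - a)) by (apply Rmin_pos; lra).
    split. lra. rewrite Rabs_left; lra.
Qed.

Lemma approx0 X a b x0 : a < b -> a <= x0 <= b ->
  (forall eps, 0 < eps -> exists del, 0 < del /\
     forall p, a < p < b -> Rabs (p - x0) < del -> Rabs X < eps) -> X = 0.
Proof.
  intros Hab Hx H. destruct (Req_dec X 0) as [|HX]; auto. exfalso.
  assert (HX' : 0 < Rabs X) by (apply Rabs_pos_lt; auto).
  destruct (H (Rabs X) HX') as [d [Hd Hp]].
  destruct (exists_near a b x0 d Hab Hx Hd) as [p [H1 H2]].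
  specialize (Hp p H1 H2). lra.
Qed.

Lemma ext_endpoint (c F : R -> R) a b x0 al K : 0 < al -> a < b -> a <= x0 <= b ->
  (forall p, a < p < b -> c p = F p) -> continuous F x0 ->
  (forall p, a < p < b -> p <> x0 -> Rabs (c p - c x0) <= K * Rpower (Rabs (p - x0)) al) ->
  c x0 = F x0.
Proof.
  intros Hal Hab Hx Heq HF Hc.
  apply Rminus_diag_uniq. apply (approx0 _ a b x0); auto.
  intros eps He.
  destruct (cont_eps F x0 HF (eps/2)) as [d1 [Hd1 H1]]. lra.
  destruct (Rpower_small al K (eps/2) Hal) as [d2 [Hd2 H2]]. lra.
  exists (Rmin d1 d2). split. apply Rmin_pos; auto.
  intros p Hp Hpx. assert (Hm1 := Rmin_l d1 d2). assert (Hm2 := Rmin_r d1 d2).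
  destruct (Req_dec p x0) as [->|Hne].
  - rewrite <- (Heq x0 Hp). rewrite Rminus_eq_0, Rabs_R0. lra.
  - specialize (H1 p ltac:(lra)). rewrite <- (Heq p Hp) in H1.
    assert (H3 := Hc p Hp Hne).
    assert (H4 : Rabs K * Rpower (Rabs (p - x0)) al < eps / 2).
    { apply H2. apply Rabs_pos_lt; lra. lra. }
    assert (H5 : K * Rpower (Rabs (p - x0)) al <= Rabs K * Rpower (Rabs (p - x0)) al).
    { apply Rmult_le_compat_r. apply Rlt_le, Rpower_pos. apply Rle_abs. }
    replace (c x0 - F x0) with ((c x0 - c p) + (c p - F x0)) by ring.
    apply Rle_lt_trans with (1 := Rabs_triang _ _).
    rewrite <- Rabs_Ropp. replace (- (c x0 - c p)) with (c p - c x0) by ring. lra.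
Qed.

Lemma const_deriv0 (f : R -> R) a b : (forall x, a < x < b -> is_derive f x 0) ->
  forall x y, a < x < b -> a < y < b -> f x = f y.
Proof.
  intros Hd x y Hx Hy.
  destruct (MVT_gen f x y (fun _ => 0)) as [c [Hc Heq]].
  - intros t Ht. apply Hd. split.
    apply Rlt_le_trans with (Rmin x y); [apply Rmin_glb_lt; lra| lra].
    apply Rle_lt_trans with (Rmax x y); [lra | apply Rmax_lub_lt; lra].
  - intros t Ht. apply continuity_pt_filterlim.
    apply (ex_derive_continuous f). exists 0. apply Hd. split.
    apply Rlt_le_trans with (Rmin x y); [apply Rmin_glb_lt; lra| lra].
    apply Rle_lt_trans with (Rmax x y); [lra | apply Rmax_lub_lt; lra].
  - lra.
Qed.

Lemma is_derive_mult' (f g : R -> R) x df dg :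
  is_derive f x df -> is_derive g x dg -> is_derive (fun t => f t * g t) x (df * g x + f x * dg).
Proof. intros H1 H2. apply (is_derive_mult f g x df dg H1 H2). intros; apply Rmult_comm. Qed.

Lemma is_derive_minus' (f g : R -> R) x df dg :
  is_derive f x df -> is_derive g x dg -> is_derive (fun t => f t - g t) x (df - dg).
Proof. intros H1 H2. apply (is_derive_minus f g x df dg H1 H2). Qed.

Lemma is_derive_scal' (f : R -> R) k x df :
  is_derive f x df -> is_derive (fun t => k * f t) x (k * df).
Proof. intros H. apply (is_derive_scal f x k df H). Qed.

Lemma ode_pos (c d : R -> R) m k0 a b : 0 < m -> a < b ->
  (forall p, a < p < b -> is_derive c p (d p)) ->
  (forall p, a < p < b -> is_derive d p (m * m * c p)) ->
  exists A B, forall p, a < p < b ->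
    c p = A * cosh (m*p+k0) + B * sinh (m*p+k0) /\
    d p = m * (A * sinh (m*p+k0) + B * cosh (m*p+k0)).
Proof.
  intros Hm Hab Hc Hd.
  set (G1 := fun p => d p * cosh (m*p+k0) - m * (c p * sinh (m*p+k0))).
  set (G2 := fun p => d p * sinh (m*p+k0) - m * (c p * cosh (m*p+k0))).
  assert (HG1 : forall p, a < p < b -> is_derive G1 p 0).
  { intros p Hp. unfold G1. evar (l:R).
    replace 0 with l. apply is_derive_minus'. apply is_derive_mult'. apply Hd; auto.
    apply is_derive_cosh_lin. apply is_derive_scal'. apply is_derive_mult'. apply Hc; auto.
    apply is_derive_sinh_lin. unfold l; ring. }
  assert (HG2 : forall p, a < p < b -> is_derive G2 p 0).
  { intros p Hp. unfold G2. evar (l:R).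
    replace 0 with l. apply is_derive_minus'. apply is_derive_mult'. apply Hd; auto.
    apply is_derive_sinh_lin. apply is_derive_scal'. apply is_derive_mult'. apply Hc; auto.
    apply is_derive_cosh_lin. unfold l; ring. }
  set (pm := (a+b)/2). assert (Hpm : a < pm < b) by (unfold pm; lra).
  exists (- G2 pm / m), (G1 pm / m). intros p Hp.
  assert (E1 := const_deriv0 G1 a b HG1 p pm Hp Hpm).
  assert (E2 := const_deriv0 G2 a b HG2 p pm Hp Hpm).
  rewrite <- E1, <- E2. unfold G1, G2.
  assert (Hcs := cosh2_sinh2 (m*p+k0)).
  set (C := cosh (m*p+k0)) in *. set (S := sinh (m*p+k0)) in *.
  split.
  - transitivity (c p * (C*C - S*S)). rewrite Hcs; ring. field. lra.
  - transitivity (d p * (C*C - S*S)). rewrite Hcs; ring. field. lra.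
Qed.

Lemma ode_zero (c d : R -> R) a b : a < b ->
  (forall p, a < p < b -> is_derive c p (d p)) ->
  (forall p, a < p < b -> is_derive d p 0) ->
  exists A B, forall p, a < p < b -> c p = A + B * p /\ d p = B.
Proof.
  intros Hab Hc Hd.
  set (pm := (a+b)/2). assert (Hpm : a < pm < b) by (unfold pm; lra).
  assert (E := const_deriv0 d a b Hd).
  set (G := fun p => c p - d pm * p).
  assert (HG : forall p, a < p < b -> is_derive G p 0).
  { intros p Hp. unfold G. evar (l:R). replace 0 with l. apply is_derive_minus'. apply Hc; auto.
    apply is_derive_scal'. apply is_derive_id. unfold l. rewrite (E p pm) by auto. simpl. unfold one; simpl. ring. }
  exists (G pm), (d pm). intros p Hp. split.
  rewrite <- (const_deriv0 G a b HG p pm); auto. unfold G; ring.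
  apply E; auto.
Qed.


Lemma RInt_correct_R (g : R -> R) a b : ex_RInt g a b -> is_RInt g a b (RInt g a b).
Proof. exact (@RInt_correct R_CompleteNormedModule g a b). Qed.
Lemma is_RInt_unique_R (g : R -> R) a b l : is_RInt g a b l -> RInt g a b = l.
Proof. exact (@is_RInt_unique R_CompleteNormedModule g a b l). Qed.
Lemma is_RInt_ext_R (g h : R -> R) a b l : (forall x, Rmin a b < x < Rmax a b -> g x = h x) ->
  is_RInt g a b l -> is_RInt h a b l.
Proof. exact (@is_RInt_ext R_NormedModule g h a b l). Qed.
Lemma opp_RInt_swap_R (g : R -> R) a b : ex_RInt g a b -> - RInt g a b = RInt g b a.
Proof. exact (@opp_RInt_swap R_CompleteNormedModule g a b). Qed.
Lemma RInt_comp_lin_R (g : R -> R) u v a b : ex_RInt g (u * a + v) (u * b + v) ->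
  RInt (fun y => u * g (u * y + v)) a b = RInt g (u * a + v) (u * b + v).
Proof. exact (@RInt_comp_lin R_CompleteNormedModule g u v a b). Qed.
Lemma ex_RInt_swap_R (g : R -> R) a b : ex_RInt g a b -> ex_RInt g b a.
Proof. exact (@ex_RInt_swap R_CompleteNormedModule g a b). Qed.
Lemma RInt_ext_R (g h : R -> R) a b : (forall x, Rmin a b < x < Rmax a b -> g x = h x) ->
  RInt g a b = RInt h a b.
Proof. exact (@RInt_ext R_CompleteNormedModule g h a b). Qed.

Lemma nat_large r : exists n : nat, r < INR n.
Proof.
  destruct (archimed (Rabs r)) as [H1 _].
  assert (Hz : (0 < up (Rabs r))%Z).
  { apply lt_0_IZR. assert (H:=Rabs_pos r). lra. }
  exists (Z.to_nat (up (Rabs r))). rewrite INR_IZR_INZ, Z2Nat.id by lia.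
  assert (H:=Rle_abs r). lra.
Qed.

Lemma bernoulli h k : 0 <= h -> 1 + INR k * h <= (1 + h) ^ k.
Proof.
  intros Hh. induction k as [|k IH]. simpl; lra.
  rewrite S_INR. simpl. assert (H:= pos_INR k).
  assert (0 <= INR k * h * h) by (apply Rmult_le_pos; [apply Rmult_le_pos|]; lra). nra.
Qed.

Lemma cont_mul_diff (f g : R -> R) x : continuous f x -> ex_derive g x ->
  continuous (fun y => f y * g y) x.
Proof.
  intros Hf Hg. apply (continuous_mult f g); auto. apply (ex_derive_continuous g); auto.
Qed.

Lemma ex_RInt_cont (g : R -> R) a b : (forall x, continuous g x) -> ex_RInt g a b.
Proof. intros H. apply (@ex_RInt_continuous R_CompleteNormedModule g a b). intros; apply H. Qed.

Lemma RInt_ge_const g a b K : a <= b -> ex_RInt g a b -> (forall x, a < x < b -> K <= g x) ->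
  (b - a) * K <= RInt g a b.
Proof.
  intros Hab Hg H. replace ((b - a) * K) with (RInt (fun _ => K) a b).
  apply RInt_le; auto. apply ex_RInt_const.
  rewrite RInt_const. reflexivity.
Qed.

Lemma is_RInt0_comb (g h : R -> R) a b c d : is_RInt g a b 0 -> is_RInt h a b 0 ->
  is_RInt (fun x => c * g x + d * h x) a b 0.
Proof.
  intros Hg Hh. assert (E : plus (scal c (0:R)) (scal d (0:R)) = 0).
  { unfold plus, scal; simpl. unfold mult; simpl. change (c * 0 + d * 0 = 0). ring. }
  rewrite <- E. apply (@is_RInt_plus R_NormedModule (fun y => scal c (g y)) (fun y => scal d (h y))).
  apply (@is_RInt_scal R_NormedModule); auto. apply (@is_RInt_scal R_NormedModule); auto.
Qed.

Section Fourier.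
Variable f : R -> R.
Hypothesis f_cont : forall x, continuous f x.
Hypothesis f_even : forall x, f (- x) = f x.
Hypothesis f_cos : forall k : nat, RInt (fun x => f x * cos (INR k * x)) (- PI) PI = 0.

Lemma f_ex (g : R -> R) a b : (forall x, ex_derive g x) -> ex_RInt (fun x => f x * g x) a b.
Proof. intros Hg. apply ex_RInt_cont. intros x. apply cont_mul_diff; auto. Qed.

Lemma base_cos (m : Z) : is_RInt (fun x => f x * cos (IZR m * x)) (- PI) PI 0.
Proof.
  assert (Hn : forall n : nat, is_RInt (fun x => f x * cos (INR n * x)) (- PI) PI 0).
  { intros n. rewrite <- (f_cos n). apply RInt_correct_R. apply f_ex. intros; auto_derive; auto. }
  destruct (Z_le_gt_dec 0 m) as [Hm|Hm].
  - specialize (Hn (Z.to_nat m)). rewrite INR_IZR_INZ, Z2Nat.id in Hn by lia. exact Hn.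
  - specialize (Hn (Z.to_nat (- m))). rewrite INR_IZR_INZ, Z2Nat.id in Hn by lia.
    apply (is_RInt_ext_R (fun x => f x * cos (IZR (- m) * x))); auto.
    intros x _. rewrite opp_IZR. replace (- IZR m * x) with (- (IZR m * x)) by ring.
    rewrite cos_neg. reflexivity.
Qed.

Lemma base_sin (r : R) : is_RInt (fun x => f x * sin (r * x)) (- PI) PI 0.
Proof.
  set (g := fun x => f x * sin (r * x)).
  assert (Hg : ex_RInt g (- PI) PI) by (apply f_ex; intros; auto_derive; auto).
  assert (E : RInt g (- PI) PI = - RInt g (- PI) PI).
  { assert (E1 := RInt_comp_lin_R g (-1) 0 (- PI) PI).
    replace (-1 * - PI + 0) with PI in E1 by ring. replace (-1 * PI + 0) with (- PI) in E1 by ring.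
    specialize (E1 (ex_RInt_swap_R _ _ _ Hg)).
    rewrite <- (opp_RInt_swap_R g (-PI) PI Hg) in E1.
    rewrite <- E1. apply RInt_ext_R. intros x _. unfold g.
    replace (-1 * x + 0) with (- x) by ring. rewrite f_even.
    replace (r * - x) with (- (r * x)) by ring. rewrite sin_neg. ring. }
  assert (E2 : RInt g (- PI) PI = 0) by lra.
  rewrite <- E2. apply RInt_correct_R; auto.
Qed.

Definition pk (e x0 x : R) := e + cos x0 * cos x + sin x0 * sin x.

Lemma peak_int (e x0 : R) (k : nat) : forall m : Z,
  is_RInt (fun x => f x * pk e x0 x ^ k * cos (IZR m * x)) (- PI) PI 0 /\
  is_RInt (fun x => f x * pk e x0 x ^ k * sin (IZR m * x)) (- PI) PI 0.
Proof.
  induction k as [|k IH]; intros m.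
  - split.
    + apply (is_RInt_ext_R (fun x => f x * cos (IZR m * x))). intros; simpl; ring. apply base_cos.
    + apply (is_RInt_ext_R (fun x => f x * sin (IZR m * x))). intros; simpl; ring. apply base_sin.
  - destruct (IH m) as [Cm Sm]. destruct (IH (m+1)%Z) as [Cp Sp]. destruct (IH (m-1)%Z) as [Cn Sn].
    rewrite plus_IZR in Cp, Sp. rewrite minus_IZR in Cn, Sn.
    set (F := fun x => f x * pk e x0 x ^ k) in *.
    split.
    + apply (is_RInt_ext_R (fun x => e * (F x * cos (IZR m * x)) + 1 * (
          (cos x0 / 2) * (F x * cos ((IZR m + 1) * x)) + 1 * (
          (cos x0 / 2) * (F x * cos ((IZR m - 1) * x)) + 1 * (
          (sin x0 / 2) * (F x * sin ((IZR m + 1) * x)) + (- (sin x0 / 2)) * (F x * sin ((IZR m - 1) * x))))))).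
      * intros x _. unfold F. simpl.
        replace ((IZR m + 1) * x) with (IZR m * x + x) by ring.
        replace ((IZR m - 1) * x) with (IZR m * x - x) by ring.
        rewrite cos_plus, cos_minus, sin_plus, sin_minus. unfold pk. generalize ((e + cos x0 * cos x + sin x0 * sin x) ^ k) (cos (IZR m * x)) (sin (IZR m * x)) (f x) (cos x) (sin x); intros. field.
      * apply is_RInt0_comb; [auto|]. apply is_RInt0_comb; [auto|]. apply is_RInt0_comb; [auto|]. apply is_RInt0_comb; auto.
    + apply (is_RInt_ext_R (fun x => e * (F x * sin (IZR m * x)) + 1 * (
          (cos x0 / 2) * (F x * sin ((IZR m + 1) * x)) + 1 * (
          (cos x0 / 2) * (F x * sin ((IZR m - 1) * x)) + 1 * (
          (sin x0 / 2) * (F x * cos ((IZR m - 1) * x)) + (- (sin x0 / 2)) * (F x * cos ((IZR m + 1) * x))))))).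
      * intros x _. unfold F. simpl.
        replace ((IZR m + 1) * x) with (IZR m * x + x) by ring.
        replace ((IZR m - 1) * x) with (IZR m * x - x) by ring.
        rewrite cos_plus, cos_minus, sin_plus, sin_minus. unfold pk. generalize ((e + cos x0 * cos x + sin x0 * sin x) ^ k) (cos (IZR m * x)) (sin (IZR m * x)) (f x) (cos x) (sin x); intros. field.
      * apply is_RInt0_comb; [auto|]. apply is_RInt0_comb; [auto|]. apply is_RInt0_comb; [auto|]. apply is_RInt0_comb; auto.
Qed.

Lemma peak_int0 e x0 k : RInt (fun x => f x * pk e x0 x ^ k) (- PI) PI = 0.
Proof.
  apply is_RInt_unique_R. destruct (peak_int e x0 k 0%Z) as [H _].
  apply (is_RInt_ext_R _ _ _ _ _ (fun x _ => eq_refl)) in H.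
  revert H. apply is_RInt_ext_R. intros x _. simpl. rewrite Rmult_0_l, cos_0. ring.
Qed.

Lemma cos_le_cos_abs t u : 0 <= u <= Rabs t -> Rabs t <= PI -> cos t <= cos u.
Proof.
  intros Hu Ht. assert (E : cos t = cos (Rabs t)).
  { destruct (Rle_dec 0 t). rewrite Rabs_right; auto; lra. rewrite Rabs_left by lra. rewrite cos_neg; auto. }
  rewrite E. destruct (Req_dec u (Rabs t)) as [->|Hne]. lra.
  apply Rlt_le, cos_decreasing_1; lra.
Qed.

Lemma fourier_pos x0 M : (forall x, Rabs (f x) <= M) -> - PI < x0 < PI -> 0 < f x0 -> False.
Proof.
  intros HM Hx0 Hf0.
  assert (HM0 : 0 <= M) by (apply Rle_trans with (Rabs (f x0)); [apply Rabs_pos| auto]).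
  set (y := f x0 / 2). assert (Hy : 0 < y) by (unfold y; lra).
  destruct (cont_eps f x0 (f_cont x0) y Hy) as [d1 [Hd1 H1]].
  assert (Hf : forall x, Rabs (x - x0) < d1 -> y < f x).
  { intros x Hx. specialize (H1 x Hx). apply Rabs_def2 in H1. unfold y in *. lra. }
  assert (HPI := PI2_3_2). assert (HPI0 := PI_RGT_0).
  set (eta := Rmin (Rmin (d1/2) 1) (Rmin ((x0+PI)/2) ((PI-x0)/2))).
  assert (He1 := Rmin_l (Rmin (d1/2) 1) (Rmin ((x0+PI)/2) ((PI-x0)/2))).
  assert (He2 := Rmin_r (Rmin (d1/2) 1) (Rmin ((x0+PI)/2) ((PI-x0)/2))).
  assert (He3 := Rmin_l (d1/2) 1). assert (He4 := Rmin_r (d1/2) 1).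
  assert (He5 := Rmin_l ((x0+PI)/2) ((PI-x0)/2)). assert (He6 := Rmin_r ((x0+PI)/2) ((PI-x0)/2)).
  fold eta in He1, He2.
  assert (Heta : 0 < eta) by (unfold eta; repeat apply Rmin_pos; lra).
  set (ce := cos eta).
  assert (Hce0 : 0 < ce) by (apply cos_gt_0; lra).
  assert (Hce1 : ce < 1) by (rewrite <- cos_0; apply cos_decreasing_1; lra).
  set (e := (1 - ce) / 2). assert (He : 0 < e) by (unfold e; lra).
  assert (Hpk : forall x, pk e x0 x = e + cos (x - x0)).
  { intros x. unfold pk. rewrite cos_minus. ring. }
  assert (Hfar : forall x, - PI <= x <= PI -> eta <= Rabs (x - x0) -> Rabs (pk e x0 x) <= 1).
  { intros x Hx Hd. rewrite Hpk. assert (Hc : cos (x - x0) <= ce).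
    { destruct (Rle_dec (Rabs (x - x0)) PI) as [Hle|Hgt].
      - apply cos_le_cos_abs; lra.
      - assert (E : cos (x - x0) = cos (2 * PI - Rabs (x - x0))).
        { rewrite (cos_minus (2*PI)), cos_2PI, sin_2PI.
          destruct (Rle_dec 0 (x - x0)). rewrite Rabs_right by lra. ring.
          rewrite Rabs_left by lra. rewrite cos_neg. ring. }
        assert (Ht : Rabs (x - x0) <= 2 * PI - 2 * eta).
        { destruct (Rle_dec 0 (x - x0)). rewrite Rabs_right by lra. lra.
          rewrite Rabs_left by lra. lra. }
        rewrite E. apply cos_le_cos_abs; rewrite Rabs_right by lra; lra. }
    assert (H := COS_bound (x - x0)).
    apply Rabs_le. split; unfold e; lra. }
  assert (Hnear : forall x, Rabs (x - x0) <= eta -> 0 < pk e x0 x).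
  { intros x Hx. rewrite Hpk.
    assert (ce <= cos (x - x0)).
    { assert (E : cos (x - x0) = cos (Rabs (x - x0))).
      { destruct (Rle_dec 0 (x - x0)). rewrite Rabs_right; auto; lra. rewrite Rabs_left by lra. rewrite cos_neg; auto. }
      rewrite E. unfold ce. apply cos_le_cos_abs; rewrite (Rabs_right eta) by lra; try split; try lra. apply Rabs_pos. }
    lra. }
  assert (Hpkc : forall x, continuous (pk e x0) x).
  { intros x. apply (ex_derive_continuous (pk e x0)). unfold pk. auto_derive. auto. }
  assert (Hpk0 : pk e x0 x0 = e + 1).
  { rewrite Hpk, Rminus_eq_0, cos_0. ring. }
  destruct (cont_eps (pk e x0) x0 (Hpkc x0) (e/2)) as [d2 [Hd2 H2]]. lra.
  assert (Hpeak : forall x, Rabs (x - x0) < d2 -> 1 + e/2 < pk e x0 x).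
  { intros x Hx. specialize (H2 x Hx). rewrite Hpk0 in H2. apply Rabs_def2 in H2. lra. }
  set (eta' := Rmin eta (d2/2)).
  assert (Hm1 := Rmin_l eta (d2/2)). assert (Hm2 := Rmin_r eta (d2/2)). fold eta' in Hm1, Hm2.
  assert (Heta' : 0 < eta') by (unfold eta'; apply Rmin_pos; lra).
  destruct (nat_large (2 * PI * M / (2 * eta' * y * (e / 2)))) as [k Hk].
  set (g := fun x => f x * pk e x0 x ^ k).
  assert (Hout : forall x, - PI <= x <= PI -> eta' <= Rabs (x - x0) -> - M <= g x).
  { intros x Hx Hd. unfold g. destruct (Rle_dec (Rabs (x - x0)) eta) as [Hle|Hgt].
    - assert (0 < f x) by (apply Rlt_trans with y; auto; apply Hf; lra).
      assert (0 <= pk e x0 x ^ k) by (apply pow_le; apply Rlt_le; apply Hnear; auto).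
      assert (0 <= f x * pk e x0 x ^ k) by (apply Rmult_le_pos; lra). lra.
    - assert (Hp := Hfar x Hx ltac:(lra)).
      assert (Hpk1 : Rabs (pk e x0 x ^ k) <= 1).
      { rewrite <- RPow_abs. rewrite <- (pow1 k). apply pow_incr. split; auto. apply Rabs_pos. }
      assert (Rabs (f x * pk e x0 x ^ k) <= M).
      { rewrite Rabs_mult. rewrite <- (Rmult_1_r M). apply Rmult_le_compat; auto; apply Rabs_pos. }
      apply Rabs_le_between in H. lra. }
  assert (Hin : forall x, Rabs (x - x0) <= eta' -> y * (1 + e/2) ^ k <= g x).
  { intros x Hx. unfold g. apply Rmult_le_compat.
    lra. apply pow_le; lra. apply Rlt_le, Hf; lra.
    apply pow_incr. split. lra. apply Rlt_le, Hpeak. lra. }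
  assert (Hg : forall a b, ex_RInt g a b).
  { intros a b. apply f_ex. intros x. unfold pk. auto_derive. auto. }
  assert (Hint := peak_int0 e x0 k). fold g in Hint.
  assert (C1 := @RInt_Chasles R_CompleteNormedModule g (- PI) (x0 - eta') PI (Hg _ _) (Hg _ _)).
  assert (C2 := @RInt_Chasles R_CompleteNormedModule g (x0 - eta') (x0 + eta') PI (Hg _ _) (Hg _ _)).
  change plus with Rplus in C1, C2. simpl in C1, C2.
  assert (I1 : (x0 - eta' - - PI) * (- M) <= RInt g (- PI) (x0 - eta')).
  { apply RInt_ge_const. lra. apply Hg. intros x Hx. apply Hout. lra.
    rewrite Rabs_left by lra. lra. }
  assert (I3 : (PI - (x0 + eta')) * (- M) <= RInt g (x0 + eta') PI).
  { apply RInt_ge_const. lra. apply Hg. intros x Hx. apply Hout. lra.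
    rewrite Rabs_right by lra. lra. }
  assert (I2 : (x0 + eta' - (x0 - eta')) * (y * (1 + e/2) ^ k) <= RInt g (x0 - eta') (x0 + eta')).
  { apply RInt_ge_const. lra. apply Hg. intros x Hx. apply Hin.
    apply Rabs_le. lra. }
  assert (Hb := bernoulli (e/2) k ltac:(lra)).
  assert (Hk' : 2 * PI * M < 2 * eta' * y * (e / 2) * INR k).
  { apply Rmult_lt_compat_l with (r := 2 * eta' * y * (e / 2)) in Hk.
    replace (2 * eta' * y * (e / 2) * (2 * PI * M / (2 * eta' * y * (e / 2)))) with (2 * PI * M) in Hk.
    lra. field. repeat split; lra.
    repeat apply Rmult_lt_0_compat; lra. }
  assert (2 * eta' * y * (1 + INR k * (e/2)) <= 2 * eta' * y * (1 + e/2) ^ k).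
  { apply Rmult_le_compat_l; auto. apply Rmult_le_pos; lra. }
  assert (0 <= 2 * eta' * y) by (apply Rmult_le_pos; lra).
  nra.
Qed.


End Fourier.

Lemma fourier_zero (f : R -> R) M : (forall x, continuous f x) -> (forall x, f (- x) = f x) ->
  (forall k : nat, RInt (fun x => f x * cos (INR k * x)) (- PI) PI = 0) ->
  (forall x, Rabs (f x) <= M) -> forall x, - PI < x < PI -> f x = 0.
Proof.
  intros Hc He Hk HM x Hx.
  destruct (Rtotal_order (f x) 0) as [Hlt|[Heq|Hgt]]; auto.
  - exfalso. apply (fourier_pos (fun x => - f x)) with x M; auto.
    + intros z. apply (continuous_opp f); auto.
    + intros z. rewrite He; auto.
    + intros k. apply is_RInt_unique_R.
      assert (H0 : is_RInt (fun x => f x * cos (INR k * x)) (- PI) PI 0).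
      { rewrite <- (Hk k). apply RInt_correct_R. apply ex_RInt_cont. intros z.
        apply cont_mul_diff; auto. auto_derive; auto. }
      apply (is_RInt_ext_R (fun z => -1 * (f z * cos (INR k * z)) + 0 * (f z * cos (INR k * z)))).
      intros; ring. apply is_RInt0_comb; auto.
    + intros z. rewrite Rabs_Ropp; auto.
    + lra.
  - exfalso. apply (fourier_pos f Hc He Hk x M); auto.
Qed.

Lemma lip_deriv (w w' : R -> R) lo hi L :
  (forall x, lo <= x <= hi -> is_derive w x (w' x)) -> (forall x, lo <= x <= hi -> Rabs (w' x) <= L) ->
  forall a b, lo <= a <= hi -> lo <= b <= hi -> Rabs (w a - w b) <= L * Rabs (a - b).
Proof.
  intros Hd HL a b Ha Hb.
  assert (Hmin1 := Rmin_l b a). assert (Hmin2 := Rmin_r b a).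
  assert (Hmax1 := Rmax_l b a). assert (Hmax2 := Rmax_r b a).
  assert (Hlo : lo <= Rmin b a) by (apply Rmin_glb; lra).
  assert (Hhi : Rmax b a <= hi) by (apply Rmax_lub; lra).
  destruct (MVT_gen w b a w') as [c [Hc Heq]].
  - intros x Hx. apply Hd. lra.
  - intros x Hx. apply continuity_pt_filterlim. apply (ex_derive_continuous w). exists (w' x). apply Hd. lra.
  - rewrite Heq. rewrite Rabs_mult. apply Rmult_le_compat_r. apply Rabs_pos. apply HL. lra.
Qed.

Definition niceI lo hi (w : R -> R) := exists M L,
  (forall p, lo <= p <= hi -> Rabs (w p) <= M) /\
  (forall pa pb, lo <= pa <= hi -> lo <= pb <= hi -> Rabs (w pa - w pb) <= L * Rabs (pa - pb)).

Lemma hyp_bound y R : Rabs y <= R -> Rabs (sinh y) <= exp R /\ Rabs (cosh y) <= exp R.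
Proof.
  intros H. apply Rabs_le_between in H.
  assert (H1 : exp y <= exp R). { destruct (Req_dec y R) as [->|]. lra. apply Rlt_le, exp_increasing; lra. }
  assert (H2 : exp (- y) <= exp R). { destruct (Req_dec (-y) R) as [->|]. lra. apply Rlt_le, exp_increasing; lra. }
  assert (H3 := exp_pos y). assert (H4 := exp_pos (-y)).
  unfold sinh, cosh. split; apply Rabs_le; split; lra.
Qed.

Lemma lin_bound m c lo hi p : lo <= p <= hi -> Rabs (m * p + c) <= Rabs m * (Rabs lo + Rabs hi) + Rabs c.
Proof.
  intros Hp. apply Rle_trans with (Rabs (m * p) + Rabs c). apply Rabs_triang.
  rewrite Rabs_mult. apply Rplus_le_compat_r. apply Rmult_le_compat_l. apply Rabs_pos.
  assert (H1:=Rabs_pos lo). assert (H2:=Rabs_pos hi).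
  destruct (Rle_dec 0 p). rewrite Rabs_right by lra. assert (H:=Rle_abs hi). lra.
  rewrite Rabs_left by lra. assert (H:=Rabs_maj2 lo). lra.
Qed.

Lemma nice_sinh K m c lo hi : niceI lo hi (fun p => K * sinh (m*p+c)).
Proof.
  set (R := Rabs m * (Rabs lo + Rabs hi) + Rabs c).
  exists (Rabs K * exp R), (Rabs (K * m) * exp R). split.
  - intros p Hp. rewrite Rabs_mult. apply Rmult_le_compat_l. apply Rabs_pos.
    apply (hyp_bound _ R). apply lin_bound; auto.
  - apply (lip_deriv _ (fun p => K * (m * cosh (m*p+c)))).
    + intros x _. apply is_derive_scal'. apply is_derive_sinh_lin.
    + intros x Hx. replace (K * (m * cosh (m * x + c))) with ((K * m) * cosh (m*x+c)) by ring.
      rewrite Rabs_mult. apply Rmult_le_compat_l. apply Rabs_pos.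
      apply (hyp_bound _ R). apply lin_bound; auto.
Qed.

Lemma nice_cosh K m c lo hi : niceI lo hi (fun p => K * cosh (m*p+c)).
Proof.
  set (R := Rabs m * (Rabs lo + Rabs hi) + Rabs c).
  exists (Rabs K * exp R), (Rabs (K * m) * exp R). split.
  - intros p Hp. rewrite Rabs_mult. apply Rmult_le_compat_l. apply Rabs_pos.
    apply (hyp_bound _ R). apply lin_bound; auto.
  - apply (lip_deriv _ (fun p => K * (m * sinh (m*p+c)))).
    + intros x _. apply is_derive_scal'. apply is_derive_cosh_lin.
    + intros x Hx. replace (K * (m * sinh (m * x + c))) with ((K * m) * sinh (m*x+c)) by ring.
      rewrite Rabs_mult. apply Rmult_le_compat_l. apply Rabs_pos.
      apply (hyp_bound _ R). apply lin_bound; auto.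
Qed.

Lemma nice_piece p0 p1 w1 w2 : p0 <= p1 <= 0 -> niceI p1 0 w1 -> niceI p0 p1 w2 -> w1 p1 = w2 p1 ->
  niceI p0 0 (fun p => if Rle_dec p1 p then w1 p else w2 p).
Proof.
  intros Hp [M1 [L1 [HM1 HL1]]] [M2 [L2 [HM2 HL2]]] E.
  exists (Rabs M1 + Rabs M2), (Rabs L1 + Rabs L2).
  assert (A1 := Rabs_pos L1). assert (A2 := Rabs_pos L2). assert (A3 := Rle_abs L1). assert (A4 := Rle_abs L2).
  split.
  - intros p Hp'. destruct (Rle_dec p1 p).
    + assert (H := HM1 p ltac:(lra)). assert (H1 := Rle_abs M1). assert (H2 := Rabs_pos M2). lra.
    + assert (H := HM2 p ltac:(lra)). assert (H1 := Rle_abs M2). assert (H2 := Rabs_pos M1). lra.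
  - assert (G : forall pa pb, p1 <= pa <= 0 -> p0 <= pb <= p1 ->
      Rabs (w1 pa - w2 pb) <= (Rabs L1 + Rabs L2) * Rabs (pa - pb)).
    { intros pa pb Ha Hb.
      replace (w1 pa - w2 pb) with ((w1 pa - w1 p1) + (w2 p1 - w2 pb)) by (rewrite E; ring).
      apply Rle_trans with (1 := Rabs_triang _ _).
      assert (B1 := HL1 pa p1 Ha ltac:(lra)). assert (B2 := HL2 p1 pb ltac:(lra) Hb).
      rewrite (Rabs_right (pa - p1)) in B1 by lra. rewrite (Rabs_right (p1 - pb)) in B2 by lra.
      rewrite (Rabs_right (pa - pb)) by lra.
      assert (L1 * (pa - p1) <= Rabs L1 * (pa - p1)) by (apply Rmult_le_compat_r; lra).
      assert (L2 * (p1 - pb) <= Rabs L2 * (p1 - pb)) by (apply Rmult_le_compat_r; lra).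
      assert (0 <= Rabs L1 * (p1 - pb)) by (apply Rmult_le_pos; lra).
      assert (0 <= Rabs L2 * (pa - p1)) by (apply Rmult_le_pos; lra). nra. }
    intros pa pb Ha Hb. destruct (Rle_dec p1 pa); destruct (Rle_dec p1 pb).
    + apply Rle_trans with (L1 * Rabs (pa - pb)). apply HL1; lra.
      apply Rmult_le_compat_r. apply Rabs_pos. lra.
    + apply G; lra.
    + rewrite <- Rabs_Ropp, Ropp_minus_distr. rewrite <- (Rabs_Ropp (pa - pb)), Ropp_minus_distr. apply G; lra.
    + apply Rle_trans with (L2 * Rabs (pa - pb)). apply HL2; lra.
      apply Rmult_le_compat_r. apply Rabs_pos. lra.
Qed.

Lemma lip_cos x y : Rabs (cos x - cos y) <= Rabs (x - y).
Proof.
  rewrite <- (Rmult_1_l (Rabs (x - y))).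
  apply (lip_deriv cos (fun t => - sin t) (Rmin x y) (Rmax x y) 1).
  intros; apply is_derive_cos. intros t _. rewrite Rabs_Ropp. apply Rabs_le, SIN_bound.
  split. apply Rmin_l. apply Rmax_l. split. apply Rmin_r. apply Rmax_r.
Qed.
Lemma lip_sin x y : Rabs (sin x - sin y) <= Rabs (x - y).
Proof.
  rewrite <- (Rmult_1_l (Rabs (x - y))).
  apply (lip_deriv sin cos (Rmin x y) (Rmax x y) 1).
  intros; apply is_derive_sin. intros t _. apply Rabs_le, COS_bound.
  split. apply Rmin_l. apply Rmax_l. split. apply Rmin_r. apply Rmax_r.
Qed.

Lemma dst_ge_q qa pa qb pb : Rabs (qa - qb) <= dst qa pa qb pb.
Proof. rewrite <- dst_q with (p := pa). unfold dst. apply sqrt_le_1_alt.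
  assert (H := pow2_ge_0 (pa - pb)). replace ((pa - pa)^2) with 0 by ring. lra. Qed.
Lemma dst_ge_p qa pa qb pb : Rabs (pa - pb) <= dst qa pa qb pb.
Proof. rewrite <- dst_p with (q := qa). unfold dst. apply sqrt_le_1_alt.
  assert (H := pow2_ge_0 (qa - qb)). replace ((qa - qa)^2) with 0 by ring. lra. Qed.

Lemma holder_prod al lo hi (u w : R -> R) : 0 < al < 1 ->
  (forall x, Rabs (u x) <= 1) -> (forall x y, Rabs (u x - u y) <= Rabs (x - y)) ->
  niceI lo hi w -> holder al (closed_strip lo hi) (fun q p => u q * w p).
Proof.
  intros Hal Hu1 Hu2 [M [L [HM HL]]].
  apply (lip_holder al _ _ (Rabs M) (Rabs L + Rabs M)); auto.
  - intros q p Hp. unfold closed_strip in Hp. rewrite Rabs_mult.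
    assert (H1 := Hu1 q). assert (H2 := HM p Hp). assert (H3 := Rle_abs M).
    assert (H4 := Rabs_pos (u q)). assert (H5 := Rabs_pos (w p)). nra.
  - intros qa pa qb pb Ha Hb. unfold closed_strip in *.
    replace (u qa * w pa - u qb * w pb) with (u qa * (w pa - w pb) + w pb * (u qa - u qb)) by ring.
    apply Rle_trans with (1 := Rabs_triang _ _). rewrite !Rabs_mult.
    assert (H1 := Hu1 qa). assert (H2 := HM pb Hb). assert (H3 := Rle_abs M).
    assert (H6 := HL pa pb Ha Hb). assert (H7 := Hu2 qa qb).
    assert (D1 := dst_ge_q qa pa qb pb). assert (D2 := dst_ge_p qa pa qb pb).
    assert (P1 := Rabs_pos (u qa)). assert (P2 := Rabs_pos (w pb)). assert (P3 := Rabs_pos (w pa - w pb)).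
    assert (P4 := Rabs_pos (u qa - u qb)). assert (P5 := Rabs_pos L). assert (P6 := Rle_abs L).
    assert (P7 := Rabs_pos (pa - pb)). assert (P8 := Rabs_pos (qa - qb)).
    assert (E1 : Rabs (u qa) * Rabs (w pa - w pb) <= Rabs L * dst qa pa qb pb).
    { apply Rle_trans with (1 * Rabs (w pa - w pb)). apply Rmult_le_compat_r; lra.
      apply Rle_trans with (L * Rabs (pa - pb)). lra.
      apply Rle_trans with (Rabs L * Rabs (pa - pb)). apply Rmult_le_compat_r; lra.
      apply Rmult_le_compat_l; lra. }
    assert (E2 : Rabs (w pb) * Rabs (u qa - u qb) <= Rabs M * dst qa pa qb pb).
    { apply Rmult_le_compat; lra. }
    lra.
Qed.

Lemma holder_ext al S (f g : R -> R -> R) : (forall q p, S q p -> f q p = g q p) ->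
  holder al S g -> holder al S f.
Proof.
  intros E [[M HM] [C HC]]. split. exists M. intros q p H. rewrite E; auto.
  exists C. intros qa pa qb pb H1 H2 H3. rewrite !E; auto.
Qed.

Lemma locally_interval lo hi p : lo < p < hi -> locally p (fun y => lo < y < hi).
Proof.
  intros Hp. assert (H : 0 < Rmin (p - lo) (hi - p)) by (apply Rmin_pos; lra).
  exists (mkposreal _ H). intros y Hy. simpl in Hy.
  change (Rabs (y - p) < Rmin (p - lo) (hi - p)) in Hy.
  assert (H1 := Rmin_l (p - lo) (hi - p)). assert (H2 := Rmin_r (p - lo) (hi - p)).
  apply Rabs_def2 in Hy. lra.
Qed.

Section Branch.
Variables (A : R -> R) (K m c lo hi : R).
Hypothesis HA : forall y, lo < y < hi -> A y = K * sinh (m*y+c).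
Let phi := fun q p => cos q * A p.

Lemma br_loc p : lo < p < hi -> locally p (fun y => K * sinh (m*y+c) = A y).
Proof. intros Hp. apply (filter_imp (fun y => lo < y < hi)). intros y Hy; rewrite HA; auto.
  apply locally_interval; auto. Qed.

Lemma br_A p : lo < p < hi -> is_derive A p (K * (m * cosh (m*p+c))).
Proof. intros Hp. apply (is_derive_ext_loc (fun y => K * sinh (m*y+c))). apply br_loc; auto.
  apply is_derive_scal'. apply is_derive_sinh_lin. Qed.

Lemma br_Dq q p : Dq phi q p = - sin q * A p.
Proof. unfold Dq, phi. apply is_derive_unique. auto_derive; auto. ring. Qed.

Lemma br_Dp q p : lo < p < hi -> Dp phi q p = cos q * (K * (m * cosh (m*p+c))).
Proof. intros Hp. unfold Dp, phi. apply is_derive_unique. apply is_derive_scal'. apply br_A; auto. Qed.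

Lemma br_DqDq q p : Dq (Dq phi) q p = - cos q * A p.
Proof. unfold Dq at 1. rewrite (Derive_ext _ (fun x => - sin x * A p)) by (intros; apply br_Dq).
  apply is_derive_unique. auto_derive; auto. ring. Qed.

Lemma br_DpDq q p : lo < p < hi -> Dp (Dq phi) q p = - sin q * (K * (m * cosh (m*p+c))).
Proof. intros Hp. unfold Dp at 1. rewrite (Derive_ext _ (fun y => - sin q * A y)) by (intros; apply br_Dq).
  apply is_derive_unique. apply is_derive_scal'. apply br_A; auto. Qed.

Lemma br_DqDp q p : lo < p < hi -> Dq (Dp phi) q p = - sin q * (K * (m * cosh (m*p+c))).
Proof. intros Hp. unfold Dq at 1.
  rewrite (Derive_ext _ (fun x => cos x * (K * (m * cosh (m*p+c))))) by (intros; apply br_Dp; auto).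
  apply is_derive_unique. auto_derive; auto. ring. Qed.

Lemma br_DpDp q p : lo < p < hi -> Dp (Dp phi) q p = cos q * (K * (m * (m * sinh (m*p+c)))).
Proof. intros Hp. unfold Dp at 1.
  rewrite (Derive_ext_loc _ (fun y => cos q * (K * (m * cosh (m*y+c))))).
  apply is_derive_unique. apply is_derive_scal'. apply is_derive_scal'. apply is_derive_scal'.
  apply is_derive_cosh_lin.
  apply (filter_imp (fun y => lo < y < hi)). intros y Hy. apply br_Dp; auto.
  apply locally_interval; auto. Qed.

Lemma hold_open al lo' hi' (u : R -> R) (f : R -> R -> R) (w : R -> R) : 0 < al < 1 ->
  (forall x, Rabs (u x) <= 1) -> (forall x y, Rabs (u x - u y) <= Rabs (x - y)) -> niceI lo' hi' w ->
  (forall q p, lo' < p < hi' -> f q p = u q * w p) -> holder al (open_strip lo' hi') f.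
Proof.
  intros Hal H1 H2 Hw E. apply (holder_ext _ _ _ (fun q p => u q * w p)).
  intros q p Hp. apply E; auto.
  apply (holder_sub _ _ (closed_strip lo' hi')).
  intros q p H; unfold open_strip, closed_strip in *; lra.
  apply holder_prod; auto.
Qed.

Lemma br_C2 al lo' hi' : 0 < al < 1 -> lo <= lo' -> hi' <= hi ->
  holder al (closed_strip lo' hi') phi -> C2alpha al lo' hi' phi /\ C1alpha al lo' hi' phi.
Proof.
  intros Hal Hlo Hhi Hphi.
  assert (HU1c : forall x, Rabs (cos x) <= 1) by (intros; apply Rabs_le, COS_bound).
  assert (HU1s : forall x, Rabs (sin x) <= 1) by (intros; apply Rabs_le, SIN_bound).
  assert (C1 : C1alpha al lo' hi' phi).
  { split; [auto | split; [| split]].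
    - intros q p Hp. unfold open_strip in Hp. split.
      + unfold phi. auto_derive; auto.
      + exists (cos q * (K * (m * cosh (m*p+c)))). apply is_derive_scal'. apply br_A; lra.
    - apply (hold_open al lo' hi' sin _ (fun p => (- K) * sinh (m*p+c))); auto.
      apply lip_sin. apply nice_sinh.
      intros q p Hp. rewrite br_Dq, HA by lra. ring.
    - apply (hold_open al lo' hi' cos _ (fun p => (K * m) * cosh (m*p+c))); auto.
      apply lip_cos. apply nice_cosh.
      intros q p Hp. rewrite br_Dp by lra. ring. }
  split; auto. split; auto. split; [| split; [| split; [| split; [| split]]]].
  - intros q p Hp. unfold open_strip in Hp. split.
    + exists (- cos q * A p). unfold Dq. apply (is_derive_ext (fun x => - sin x * A p)).
      intros; symmetry; apply br_Dq. auto_derive; auto. ring.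
    + exists (- sin q * (K * (m * cosh (m*p+c)))). apply (is_derive_ext (fun y => - sin q * A y)).
      intros; symmetry; apply br_Dq. apply is_derive_scal'. apply br_A; lra.
  - intros q p Hp. unfold open_strip in Hp. split.
    + exists (- sin q * (K * (m * cosh (m*p+c)))).
      apply (is_derive_ext (fun x => cos x * (K * (m * cosh (m*p+c))))).
      intros; symmetry; apply br_Dp; lra. auto_derive; auto. ring.
    + exists (cos q * (K * (m * (m * sinh (m*p+c))))).
      apply (is_derive_ext_loc (fun y => cos q * (K * (m * cosh (m*y+c))))).
      apply (filter_imp (fun y => lo < y < hi)). intros y Hy. symmetry. apply br_Dp; auto.
      apply locally_interval; lra.
      apply is_derive_scal'. apply is_derive_scal'. apply is_derive_scal'. apply is_derive_cosh_lin.
  - apply (hold_open al lo' hi' cos _ (fun p => (- K) * sinh (m*p+c))); auto.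
    apply lip_cos. apply nice_sinh.
    intros q p Hp. rewrite br_DqDq, HA by lra. ring.
  - apply (hold_open al lo' hi' sin _ (fun p => (- (K * m)) * cosh (m*p+c))); auto.
    apply lip_sin. apply nice_cosh.
    intros q p Hp. rewrite br_DpDq by lra. ring.
  - apply (hold_open al lo' hi' sin _ (fun p => (- (K * m)) * cosh (m*p+c))); auto.
    apply lip_sin. apply nice_cosh.
    intros q p Hp. rewrite br_DqDp by lra. ring.
  - apply (hold_open al lo' hi' cos _ (fun p => (K * m * m) * sinh (m*p+c))); auto.
    apply lip_cos. apply nice_sinh.
    intros q p Hp. rewrite br_DpDp by lra. ring.
Qed.

End Branch.

Lemma is_RInt_comb (g h : R -> R) a b c d Ig Ih : is_RInt g a b Ig -> is_RInt h a b Ih ->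
  is_RInt (fun x => c * g x + d * h x) a b (c * Ig + d * Ih).
Proof.
  intros Hg Hh. assert (E : plus (scal c Ig) (scal d Ih) = c * Ig + d * Ih).
  { reflexivity. }
  rewrite <- E. apply (@is_RInt_plus R_NormedModule (fun y => scal c (g y)) (fun y => scal d (h y))).
  apply (@is_RInt_scal R_NormedModule); auto. apply (@is_RInt_scal R_NormedModule); auto.
Qed.

Lemma is_RInt_const_R a b c : is_RInt (fun _ => c) a b ((b - a) * c).
Proof. exact (@is_RInt_const R_NormedModule a b c). Qed.

Lemma sin_nPI (n : nat) : sin (INR n * PI) = 0.
Proof. apply sin_eq_0_1. exists (Z.of_nat n). rewrite <- INR_IZR_INZ. reflexivity. Qed.

Lemma is_RInt_cosn (n : nat) : (1 <= n)%nat -> is_RInt (fun q => cos (INR n * q)) (- PI) PI 0.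
Proof.
  intros Hn. assert (Hr : INR n <> 0) by (apply not_0_INR; lia).
  assert (H := @is_RInt_derive R_CompleteNormedModule (fun q => sin (INR n * q) / INR n)
    (fun q => cos (INR n * q)) (- PI) PI).
  assert (E : sin (INR n * PI) / INR n + - (sin (INR n * - PI) / INR n) = 0).
  { replace (INR n * - PI) with (- (INR n * PI)) by ring.
    rewrite sin_neg, sin_nPI. field; auto. }
  simpl in H. unfold minus, plus, opp in H; simpl in H. rewrite E in H. apply H.
  - intros x _. auto_derive; auto. field; auto.
  - intros x _. apply (ex_derive_continuous (fun q => cos (INR n * q))). auto_derive; auto.
Qed.

Lemma is_RInt_coscos (k : nat) :
  is_RInt (fun q => cos q * cos (INR k * q)) (- PI) PI (if Nat.eq_dec k 1 then PI else 0).
Proof.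
  destruct (Nat.eq_dec k 1) as [->|Hk].
  - replace PI with ((1/2) * 0 + (1/2) * (PI - - PI)) at 3 by field.
    apply (is_RInt_ext_R (fun q => (1/2) * cos (INR 2 * q) + (1/2) * 1)).
    + intros x _. simpl. replace ((1 + 1) * x) with (2 * x) by ring. rewrite cos_2a_cos, Rmult_1_l. field.
    + apply is_RInt_comb. apply is_RInt_cosn; lia.
      replace (PI - - PI) with ((PI - - PI) * 1) by ring. apply is_RInt_const_R.
  - destruct k as [|k].
    + apply (is_RInt_ext_R (fun q => cos (INR 1 * q))). intros x _. simpl. ring_simplify (0 * x).
      rewrite cos_0. ring_simplify (1 * x). ring. apply is_RInt_cosn; lia.
    + replace 0 with ((1/2) * 0 + (1/2) * 0) by field.
      apply (is_RInt_ext_R (fun q => (1/2) * cos (INR (S (S k)) * q) + (1/2) * cos (INR k * q))).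
      * intros x _. rewrite !S_INR.
        replace ((INR k + 1 + 1) * x) with ((INR k + 1) * x + x) by ring.
        replace (INR k * x) with ((INR k + 1) * x - x) by ring.
        rewrite cos_plus, cos_minus. field.
      * apply is_RInt_comb. apply is_RInt_cosn; lia. apply is_RInt_cosn; lia.
Qed.

Definition K1 Gam p1 := / sinh (p1/Gam).
Definition K2 lam p0 p1 := / sinh ((p1-p0)/lam).
Definition aa Gam lam p0 p1 p := if Rle_dec p1 p then K1 Gam p1 * sinh (/Gam * p + 0)
  else K2 lam p0 p1 * sinh (/lam * p + - (p0/lam)).
Definition phi0 Gam lam p0 p1 q p := cos q * aa Gam lam p0 p1 p.

Lemma sinh_neg_lt x : x < 0 -> sinh x < 0.
Proof. intros H. rewrite <- sinh_0. apply sinh_lt; auto. Qed.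

Section Phi0.
Variables (alpha g p0 p1 jrho Gam lam : R).
Hypothesis Hal : 0 < alpha < 1.
Hypothesis Hp01 : p0 < p1.
Hypothesis Hp1 : p1 < 0.
Hypothesis HGam : 0 < Gam.
Hypothesis Hlam : 0 < lam.

Let A := aa Gam lam p0 p1.

Lemma s1_neg : sinh (p1/Gam) < 0.
Proof. apply sinh_neg_lt. apply Rdiv_neg_pos; auto. Qed.
Lemma s2_pos : 0 < sinh ((p1-p0)/lam).
Proof. apply sinh_pos. apply Rdiv_lt_0_compat; lra. Qed.

Lemma HA1 : forall y, p1 < y < 1 -> A y = K1 Gam p1 * sinh (/Gam * y + 0).
Proof. intros y Hy. unfold A, aa. destruct (Rle_dec p1 y); auto. lra. Qed.
Lemma HA2 : forall y, p0 - 1 < y < p1 -> A y = K2 lam p0 p1 * sinh (/lam * y + - (p0/lam)).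
Proof. intros y Hy. unfold A, aa. destruct (Rle_dec p1 y); auto. lra. Qed.

Lemma A_p1 : A p1 = 1.
Proof. unfold A, aa. destruct (Rle_dec p1 p1); [|lra]. unfold K1.
  replace (/ Gam * p1 + 0) with (p1/Gam) by (field; lra). field. assert (H:=s1_neg); lra. Qed.

Lemma A_p0 : A p0 = 0.
Proof. unfold A, aa. destruct (Rle_dec p1 p0). lra.
  replace (/ lam * p0 + - (p0 / lam)) with 0 by (field; lra). rewrite sinh_0. ring. Qed.

Lemma A_0 : A 0 = 0.
Proof. unfold A, aa. destruct (Rle_dec p1 0); [|lra].
  replace (/ Gam * 0 + 0) with 0 by ring. rewrite sinh_0. ring. Qed.

Lemma A_nice : niceI p0 0 A.
Proof.
  unfold A, aa. apply (nice_piece p0 p1 (fun p => K1 Gam p1 * sinh (/Gam * p + 0))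
    (fun p => K2 lam p0 p1 * sinh (/lam * p + - (p0/lam)))).
  lra. apply nice_sinh. apply nice_sinh.
  unfold K1, K2. replace (/ Gam * p1 + 0) with (p1/Gam) by (field; lra).
  replace (/ lam * p1 + - (p0 / lam)) with ((p1-p0)/lam) by (field; lra).
  assert (H1:=s1_neg). assert (H2:=s2_pos). field. lra.
Qed.

Lemma phi0_holder : holder alpha (closed_strip p0 0) (phi0 Gam lam p0 p1).
Proof.
  unfold phi0. apply (holder_prod alpha p0 0 cos A); auto.
  intros; apply Rabs_le, COS_bound. apply lip_cos. apply A_nice.
Qed.

Lemma phi0_holder_sub lo hi : p0 <= lo -> hi <= 0 -> holder alpha (closed_strip lo hi) (phi0 Gam lam p0 p1).
Proof. intros H1 H2. apply (holder_sub _ _ (closed_strip p0 0)). intros q p Hp. unfold closed_strip in *; lra.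
  apply phi0_holder. Qed.

Lemma phi0_inX : in_X alpha p0 p1 (phi0 Gam lam p0 p1).
Proof.
  split; [| split; [| split; [| split]]].
  - intros q p _. unfold phi0. split.
    + rewrite cos_plus, cos_2PI, sin_2PI. ring.
    + rewrite cos_neg. reflexivity.
  - apply phi0_holder.
  - intros d Hd. split.
    + apply (br_C2 A _ _ _ (p0 - 1) p1 HA2); auto. lra. lra. apply phi0_holder_sub; lra.
    + apply (br_C2 A _ _ _ p1 1 HA1); auto. lra. lra. apply phi0_holder_sub; lra.
  - intros q. unfold phi0. fold A. rewrite A_p0. ring.
  - split.
    + apply (br_C2 A _ _ _ p1 1 HA1); auto. lra. lra. apply phi0_holder_sub; lra.
    + apply (br_C2 A _ _ _ (p0 - 1) p1 HA2); auto. lra. lra. apply phi0_holder_sub; lra.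
Qed.

Lemma phi0_kernel : g * jrho = Gam ^ 2 * coth (p1 / Gam) - lam ^ 2 * coth ((p1 - p0) / lam) ->
  in_kernel alpha g p0 p1 jrho Gam lam (phi0 Gam lam p0 p1).
Proof.
  intros Hg. unfold in_kernel. cbv zeta.
  assert (S1 := s1_neg). assert (S2 := s2_pos).
  split; [apply phi0_inX | split; [| split; [| split]]].
  - intros q p Hp. unfold phi0. fold A.
    rewrite (br_DpDp A _ _ _ p1 1 HA1 q p) by lra. rewrite (br_DqDq A q p).
    rewrite (HA1 p) by lra. field. lra.
  - intros q p Hp. unfold phi0. fold A.
    rewrite (br_DpDp A _ _ _ (p0-1) p1 HA2 q p) by lra. rewrite (br_DqDq A q p).
    rewrite (HA2 p) by lra. field. lra.
  - intros q.
    exists (cos q * (K1 Gam p1 * (/Gam * cosh (/Gam * p1 + 0)))).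
    exists (cos q * (K2 lam p0 p1 * (/lam * cosh (/lam * p1 + - (p0/lam))))).
    split; [| split].
    + apply (filterlim_ext_loc (fun p => cos q * (K1 Gam p1 * (/Gam * cosh (/Gam * p + 0))))).
      * exists (mkposreal 1 Rlt_0_1). intros y Hy Hlt. simpl in Hy.
        change (Rabs (y - p1) < 1) in Hy. apply Rabs_def2 in Hy.
        unfold phi0. fold A. rewrite (br_Dp A _ _ _ p1 1 HA1 q y) by lra. reflexivity.
      * apply (filterlim_filter_le_1 (F := locally p1) _ (@filter_le_within R (locally p1) (@filter_filter _ _ (locally_filter p1)) (fun u => p1 < u))).
        apply (ex_derive_continuous (fun p => cos q * (K1 Gam p1 * (/Gam * cosh (/Gam * p + 0))))).
        eexists. apply is_derive_scal'. apply is_derive_scal'. apply is_derive_scal'. apply is_derive_cosh_lin.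
    + apply (filterlim_ext_loc (fun p => cos q * (K2 lam p0 p1 * (/lam * cosh (/lam * p + - (p0/lam)))))).
      * exists (mkposreal 1 Rlt_0_1). intros y Hy Hlt. simpl in Hy.
        change (Rabs (y - p1) < 1) in Hy. apply Rabs_def2 in Hy.
        unfold phi0. fold A. rewrite (br_Dp A _ _ _ (p0-1) p1 HA2 q y) by lra. reflexivity.
      * apply (filterlim_filter_le_1 (F := locally p1) _ (@filter_le_within R (locally p1) (@filter_filter _ _ (locally_filter p1)) (fun u => u < p1))).
        apply (ex_derive_continuous (fun p => cos q * (K2 lam p0 p1 * (/lam * cosh (/lam * p + - (p0/lam)))))).
        eexists. apply is_derive_scal'. apply is_derive_scal'. apply is_derive_scal'. apply is_derive_cosh_lin.
    + unfold phi0. fold A. rewrite A_p1. replace (2 * g * jrho) with (2 * (g * jrho)) by ring. rewrite Hg. unfold coth, K1, K2.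
      replace (/ Gam * p1 + 0) with (p1/Gam) by (field; lra).
      replace (/ lam * p1 + - (p0 / lam)) with ((p1-p0)/lam) by (field; lra).
      field. repeat split; lra.
  - intros q. unfold phi0, dmean. fold A. rewrite A_0, A_p1.
    rewrite (RInt_ext_R _ (fun x => cos (INR 1 * x))).
    rewrite (is_RInt_unique_R _ _ _ _ (is_RInt_cosn 1 (le_n 1))). ring.
    intros x _. simpl. ring_simplify (1 * x). ring.
Qed.

End Phi0.

Lemma cont2d_swap f x y : continuity_2d_pt f x y -> continuity_2d_pt (fun u v => f v u) y x.
Proof. intros H eps. destruct (H eps) as [d Hd]. exists d. intros u v Hu Hv. apply Hd; auto. Qed.

Lemma cont2d_of_v (C : R -> R) x y : continuous C y -> continuity_2d_pt (fun u v => C v) x y.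
Proof.
  intros HC. apply (continuity_1d_2d_pt_comp C (fun u v => v)).
  apply continuity_pt_filterlim; auto. apply continuity_2d_pt_id2.
Qed.

Lemma is_derive_const_mul (f : R -> R) x l c : is_derive f x l -> is_derive (fun y => f y * c) x (l * c).
Proof. intros H. apply (is_derive_ext (fun y => c * f y) (fun y => f y * c)). intros t; apply Rmult_comm.
  replace (l * c) with (c * l) by ring. apply is_derive_scal'; auto. Qed.

Lemma param_deriv (F : R -> R -> R) (C : R -> R) p lo hi : lo < p < hi ->
  (forall q y, lo < y < hi -> ex_derive (fun z => F q z) y) ->
  (forall q, continuity_2d_pt (Dp F) q p) ->
  (forall y, lo < y < hi -> forall q, continuous (fun x => F x y) q) ->
  (forall q, continuous C q) ->
  is_derive (fun y => RInt (fun q => F q y * C q) (- PI) PI) p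
    (RInt (fun q => Dp F q p * C q) (- PI) PI).
Proof.
  intros Hp Hd Hc2 Hc HC.
  assert (E : forall u v, Derive (fun z => F v z * C v) u = Dp F v u * C v).
  { intros u v. unfold Dp. rewrite (Derive_ext _ (fun z => C v * F v z)) by (intros; ring).
    rewrite Derive_scal. apply Rmult_comm. }
  rewrite <- (RInt_ext_R (fun t => Derive (fun u => F t u * C t) p)).
  2: { intros x _. apply E. }
  apply (is_derive_RInt_param (fun y q => F q y * C q)).
  - apply (filter_imp (fun y => lo < y < hi)). 2: apply locally_interval; auto.
    intros y Hy t _. destruct (Hd t y Hy) as [l Hl]. exists (l * C t). apply is_derive_const_mul; auto.
  - intros t _. apply (continuity_2d_pt_ext (fun u v => Dp F v u * C v)).
    intros; symmetry; apply E.
    apply (continuity_2d_pt_mult (fun u v => Dp F v u) (fun u v => C v)).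
    apply cont2d_swap. apply Hc2. apply cont2d_of_v; auto.
  - apply (filter_imp (fun y => lo < y < hi)). 2: apply locally_interval; auto.
    intros y Hy. apply ex_RInt_cont. intros x. apply (continuous_mult (fun x => F x y) C); auto.
Qed.

Lemma ex_RInt_cont2 (F C : R -> R) a b : (forall x, continuous F x) -> (forall x, continuous C x) ->
  ex_RInt (fun x => F x * C x) a b.
Proof. intros H1 H2. apply ex_RInt_cont. intros x. apply (continuous_mult F C); auto. Qed.

Lemma cont_cos_k (r : R) x : continuous (fun q => cos (r * q)) x.
Proof. apply (ex_derive_continuous (fun q => cos (r * q))). auto_derive; auto. Qed.
Lemma cont_sin_k (r : R) x : continuous (fun q => sin (r * q)) x.
Proof. apply (ex_derive_continuous (fun q => sin (r * q))). auto_derive; auto. Qed.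

Lemma is_RInt_RInt_eq (f : R -> R) a b l1 l2 : is_RInt f a b l1 -> is_RInt f a b l2 -> l1 = l2.
Proof. intros H1 H2. rewrite <- (is_RInt_unique_R _ _ _ _ H1). apply is_RInt_unique_R; auto. Qed.

Lemma ibp2 (F F1 F2 : R -> R) (k : nat) :
  (forall x, is_derive F x (F1 x)) -> (forall x, is_derive F1 x (F2 x)) -> (forall x, continuous F2 x) ->
  F1 PI = F1 (- PI) ->
  RInt (fun x => F2 x * cos (INR k * x)) (- PI) PI = - (INR k * INR k) * RInt (fun x => F x * cos (INR k * x)) (- PI) PI.
Proof.
  intros HF HF1 HF2 Hper. set (r := INR k).
  assert (CF : forall x, continuous F x) by (intros; apply (ex_derive_continuous F); eexists; apply HF).
  assert (CF1 : forall x, continuous F1 x) by (intros; apply (ex_derive_continuous F1); eexists; apply HF1).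
  set (I2 := RInt (fun x => F2 x * cos (r * x)) (- PI) PI).
  set (I1 := RInt (fun x => F1 x * sin (r * x)) (- PI) PI).
  set (I0 := RInt (fun x => F x * cos (r * x)) (- PI) PI).
  assert (J2 : is_RInt (fun x => F2 x * cos (r * x)) (- PI) PI I2).
  { apply RInt_correct_R. apply ex_RInt_cont2; auto. intros; apply cont_cos_k. }
  assert (J1 : is_RInt (fun x => F1 x * sin (r * x)) (- PI) PI I1).
  { apply RInt_correct_R. apply ex_RInt_cont2; auto. intros; apply cont_sin_k. }
  assert (J0 : is_RInt (fun x => F x * cos (r * x)) (- PI) PI I0).
  { apply RInt_correct_R. apply ex_RInt_cont2; auto. intros; apply cont_cos_k. }
  assert (Hs : sin (r * PI) = 0) by apply sin_nPI.
  assert (Hs' : sin (r * - PI) = 0) by (replace (r * - PI) with (- (r * PI)) by ring; rewrite sin_neg, Hs; ring).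
  assert (Hc' : cos (r * - PI) = cos (r * PI)) by (replace (r * - PI) with (- (r * PI)) by ring; apply cos_neg).
  assert (G1 : is_RInt (fun x => 1 * (F2 x * cos (r * x)) + (- r) * (F1 x * sin (r * x))) (- PI) PI 0).
  { assert (H := @is_RInt_derive R_CompleteNormedModule (fun x => F1 x * cos (r * x))
      (fun x => 1 * (F2 x * cos (r * x)) + (- r) * (F1 x * sin (r * x))) (- PI) PI).
    simpl in H. unfold minus, plus, opp in H; simpl in H.
    rewrite Hc', Hper in H. replace (F1 (- PI) * cos (r * PI) + - (F1 (- PI) * cos (r * PI))) with 0 in H by ring.
    apply H.
    - intros x _. evar (l : R). replace (1 * (F2 x * cos (r * x)) + - r * (F1 x * sin (r * x))) with l.
      apply is_derive_mult'. apply HF1. auto_derive; auto. unfold l. ring.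
    - intros x _. apply (continuous_plus (fun x => 1 * (F2 x * cos (r * x))) (fun x => (- r) * (F1 x * sin (r * x)))).
      apply (continuous_scal_r 1 (fun x => F2 x * cos (r * x))). apply (continuous_mult F2); auto. apply cont_cos_k.
      apply (continuous_scal_r (- r) (fun x => F1 x * sin (r * x))). apply (continuous_mult F1); auto. apply cont_sin_k. }
  assert (G2 : is_RInt (fun x => 1 * (F1 x * sin (r * x)) + r * (F x * cos (r * x))) (- PI) PI 0).
  { assert (H := @is_RInt_derive R_CompleteNormedModule (fun x => F x * sin (r * x))
      (fun x => 1 * (F1 x * sin (r * x)) + r * (F x * cos (r * x))) (- PI) PI).
    simpl in H. unfold minus, plus, opp in H; simpl in H.
    rewrite Hs, Hs' in H. replace (F PI * 0 + - (F (- PI) * 0)) with 0 in H by ring.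
    apply H.
    - intros x _. evar (l : R). replace (1 * (F1 x * sin (r * x)) + r * (F x * cos (r * x))) with l.
      apply is_derive_mult'. apply HF. auto_derive; auto. unfold l. ring.
    - intros x _. apply (continuous_plus (fun x => 1 * (F1 x * sin (r * x))) (fun x => r * (F x * cos (r * x)))).
      apply (continuous_scal_r 1 (fun x => F1 x * sin (r * x))). apply (continuous_mult F1); auto. apply cont_sin_k.
      apply (continuous_scal_r r (fun x => F x * cos (r * x))). apply (continuous_mult F); auto. apply cont_cos_k. }
  assert (E1 := is_RInt_RInt_eq _ _ _ _ _ G1 (is_RInt_comb _ _ _ _ 1 (- r) _ _ J2 J1)).
  assert (E2 := is_RInt_RInt_eq _ _ _ _ _ G2 (is_RInt_comb _ _ _ _ 1 r _ _ J1 J0)).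
  fold I2 I0. nra.
Qed.

Definition ck (phi : R -> R -> R) (k : nat) p := RInt (fun q => phi q p * cos (INR k * q)) (- PI) PI.
Definition dk (phi : R -> R -> R) (k : nat) p := RInt (fun q => Dp phi q p * cos (INR k * q)) (- PI) PI.

Lemma RInt_scal_R (f : R -> R) a b c : ex_RInt f a b -> RInt (fun x => c * f x) a b = c * RInt f a b.
Proof. intros H. exact (@RInt_scal R_CompleteNormedModule f a b c H). Qed.

Lemma per_deriv (F : R -> R) : (forall x, F (x + 2 * PI) = F x) -> (forall x, ex_derive F x) ->
  Derive F PI = Derive F (- PI).
Proof.
  intros Hp Hd. symmetry. apply is_derive_unique.
  apply (is_derive_ext (fun x => F (x + 2 * PI))). intros; apply Hp.
  assert (H : is_derive F (- PI + 2 * PI) (Derive F PI)).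
  { replace (- PI + 2 * PI) with PI by ring. apply Derive_correct; auto. }
  assert (H2 := is_derive_comp F (fun x => x + 2 * PI) (- PI) _ 1 H).
  assert (Hg : is_derive (fun x : R => x + 2 * PI) (- PI) 1).
  { apply is_derive_Reals. replace 1 with (1 + 0) by ring. apply derivable_pt_lim_plus.
    apply derivable_pt_lim_id. apply derivable_pt_lim_const. }
  replace (Derive F PI) with (scal 1 (Derive F PI)). apply (H2 Hg).
  apply (@scal_one R_Ring R_ModuleSpace).
Qed.

Lemma layer_deriv al phi a b H k : 0 < al < 1 ->
  C1alpha al a b phi ->
  (forall p, a < p < b -> exists a' b', a <= a' < p /\ p < b' <= b /\ C2alpha al a' b' phi) ->
  (forall p, a <= p <= b -> forall q, continuous (fun x => phi x p) q) ->
  (forall q p, a <= p <= b -> phi (q + 2 * PI) p = phi q p) ->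
  (forall q p, a < p < b -> Dp (Dp phi) q p + H ^ 2 * Dq (Dq phi) q p = 0) ->
  forall p, a < p < b -> is_derive (ck phi k) p (dk phi k p) /\
    is_derive (dk phi k) p ((H * INR k) * (H * INR k) * ck phi k p).
Proof.
  intros Hal [Hh1 [Hd1 [HhDq HhDp]]] HC2 Hc Hper Heq p Hp.
  split.
  - unfold ck, dk. apply (param_deriv phi (fun q => cos (INR k * q)) p a b Hp).
    + intros q y Hy. apply (Hd1 q y Hy).
    + intros q. apply (holder_cont_2d al a b); auto. lra.
    + intros y Hy. apply Hc. lra.
    + intros q. apply cont_cos_k.
  - destruct (HC2 p Hp) as [a' [b' [Ha' [Hb' [Hh2 [HdDq [HdDp [HhDqDq [HhDpDq [HhDqDp HhDpDp]]]]]]]]]].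
    assert (Hp' : a' < p < b') by lra.
    assert (E : RInt (fun q => Dp (Dp phi) q p * cos (INR k * q)) (- PI) PI =
                (H * INR k) * (H * INR k) * ck phi k p).
    { rewrite (RInt_ext_R _ (fun q => (- H ^ 2) * (Dq (Dq phi) q p * cos (INR k * q)))).
      2: { intros x _. assert (Ex := Heq x p Hp). replace (Dp (Dp phi) x p) with (- H ^ 2 * Dq (Dq phi) x p) by lra. ring. }
      rewrite RInt_scal_R.
      2: { apply ex_RInt_cont2. intros x. apply (holder_cont_q al (open_strip a' b') (Dq (Dq phi)) p);
           [lra | auto | intros; unfold open_strip; lra]. intros; apply cont_cos_k. }
      unfold ck. rewrite (ibp2 (fun x => phi x p) (fun x => Dq phi x p) (fun x => Dq (Dq phi) x p) k).
      * match goal with |- ?A = ?B => change (@eq R A B) end. ring.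
      * intros x. apply Derive_correct. apply (Hd1 x p Hp).
      * intros x. unfold Dq at 2. apply Derive_correct. apply (HdDq x p Hp').
      * intros x. apply (holder_cont_q al (open_strip a' b') (Dq (Dq phi)) p);
           [lra | auto | intros; unfold open_strip; lra].
      * unfold Dq. apply per_deriv. intros x. apply Hper. lra.
        intros x. apply (Hd1 x p Hp). }
    rewrite <- E. unfold dk.
    apply (param_deriv (Dp phi) (fun q => cos (INR k * q)) p a' b' Hp').
    + intros q y Hy. apply (HdDp q y Hy).
    + intros q. apply (holder_cont_2d al a' b'); auto. lra.
    + intros y Hy q. apply (holder_cont_q al (open_strip a b)); auto. lra.
      intros x; unfold open_strip; lra.
    + intros q. apply cont_cos_k.
Qed.

Ltac req := match goal with |- ?A = ?B => change (@eq R A B) end; ring.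

Lemma abs_RInt_le_R (f : R -> R) M : ex_RInt f (- PI) PI -> (forall t, Rabs (f t) <= M) ->
  Rabs (RInt f (- PI) PI) <= 2 * PI * M.
Proof.
  intros H1 H2. assert (HP := PI_RGT_0). replace (2 * PI * M) with ((PI - - PI) * M) by ring.
  apply abs_RInt_le_const; auto. lra.
Qed.

Lemma cos_abs_le r t : Rabs (cos (r * t)) <= 1.
Proof. apply Rabs_le, COS_bound. Qed.

Lemma ck_holder al phi k lo hi : 0 < al -> holder al (closed_strip lo hi) phi ->
  exists K, forall p p', lo <= p <= hi -> lo <= p' <= hi -> p <> p' ->
    Rabs (ck phi k p - ck phi k p') <= K * Rpower (Rabs (p - p')) al.
Proof.
  intros Hal Hh. destruct (holder_p al _ _ Hh) as [C HC].
  exists (2 * PI * Rabs C). intros p p' Hp Hp' Hne.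
  assert (Ex : forall y, lo <= y <= hi -> ex_RInt (fun q => phi q y * cos (INR k * q)) (- PI) PI).
  { intros y Hy. apply ex_RInt_cont2. intros x. apply (holder_cont_q al (closed_strip lo hi) phi y); auto.
    intros; apply cont_cos_k. }
  unfold ck. match goal with |- Rabs (?A - ?B) <= _ => replace (A - B) with (1*A + -1*B) by ring end.
  rewrite <- (is_RInt_unique_R _ _ _ _ (is_RInt_comb _ _ _ _ 1 (-1) _ _
     (RInt_correct_R _ _ _ (Ex p Hp)) (RInt_correct_R _ _ _ (Ex p' Hp')))).
  replace (2 * PI * Rabs C * Rpower (Rabs (p - p')) al) with (2 * PI * (Rabs C * Rpower (Rabs (p - p')) al)) by ring.
  apply abs_RInt_le_R.
  - apply (ex_RInt_ext (fun x => (phi x p - phi x p') * cos (INR k * x))).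
    intros; req. apply ex_RInt_cont2. intros x.
    apply (continuous_minus (fun x => phi x p) (fun x => phi x p')).
    apply (holder_cont_q al (closed_strip lo hi) phi p); auto.
    apply (holder_cont_q al (closed_strip lo hi) phi p'); auto.
    intros; apply cont_cos_k.
  - intros t. replace (1 * (phi t p * cos (INR k * t)) + -1 * (phi t p' * cos (INR k * t)))
      with ((phi t p - phi t p') * cos (INR k * t)) by ring.
    rewrite Rabs_mult. assert (H1 := cos_abs_le (INR k) t). assert (H2 := HC t p p' Hp Hp' Hne).
    assert (H3 := Rpower_pos (Rabs (p - p')) al). assert (H4 := Rle_abs C). assert (H5 := Rabs_pos (phi t p - phi t p')).
    assert (H6 : C * Rpower (Rabs (p - p')) al <= Rabs C * Rpower (Rabs (p - p')) al) by (apply Rmult_le_compat_r; lra).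
    assert (H7 := Rabs_pos (cos (INR k * t))). nra.
Qed.

Lemma ck_bottom phi k p0 : (forall q, phi q p0 = 0) -> ck phi k p0 = 0.
Proof.
  intros H. unfold ck. rewrite (RInt_ext_R _ (fun _ => 0)). rewrite RInt_const. unfold scal; simpl.
  unfold mult; simpl. ring. intros x _. rewrite H. ring.
Qed.

Lemma ck_top phi k p1 : (forall q, phi q 0 - dmean p1 phi = 0) ->
  ((1 <= k)%nat -> ck phi k 0 = 0) /\ (ck phi 0 0 = ck phi 0 p1).
Proof.
  intros H. assert (E : forall q, phi q 0 = dmean p1 phi) by (intros q; specialize (H q); lra).
  split.
  - intros Hk. unfold ck. rewrite (RInt_ext_R _ (fun q => dmean p1 phi * cos (INR k * q))).
    rewrite RInt_scal_R. rewrite (is_RInt_unique_R _ _ _ _ (is_RInt_cosn k Hk)). req.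
    apply ex_RInt_cont. intros; apply cont_cos_k. intros x _. rewrite E. ring.
  - unfold ck. rewrite (RInt_ext_R _ (fun q => dmean p1 phi)).
    rewrite RInt_const. unfold scal; simpl; unfold mult; simpl. unfold dmean.
    rewrite (RInt_ext_R (fun q => phi q p1 * cos (INR 0 * q)) (fun q => phi q p1)).
    assert (HP := PI_RGT_0). field. lra.
    intros x _. simpl. rewrite Rmult_0_l, cos_0. ring.
    intros x _. rewrite E. simpl. rewrite Rmult_0_l, cos_0. ring.
Qed.

Lemma lim_side (f : R -> R) x0 L C al (F : (R -> Prop) -> Prop) (dir : R) :
  0 < al -> (dir = 1 \/ dir = -1) ->
  F = within (fun u => 0 < dir * (u - x0)) (locally x0) ->
  filterlim f F (locally L) ->
  forall y, 0 < dir * (y - x0) ->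
  (forall z, 0 < dir * (z - x0) < dir * (y - x0) -> Rabs (f y - f z) <= C * Rpower (Rabs (y - z)) al) ->
  Rabs (f y - L) <= Rabs C * Rpower (Rabs (y - x0)) al.
Proof.
  intros Hal Hdir HF Hlim y Hy Hh.
  apply le_epsilon. intros eta Heta.
  subst F.
  assert (Hl := proj1 (filterlim_locally f L) Hlim (mkposreal eta Heta)).
  destruct Hl as [d Hd]. simpl in Hd.
  set (t := Rmin d (dir * (y - x0)) / 2).
  assert (Ht1 := Rmin_l d (dir * (y - x0))). assert (Ht2 := Rmin_r d (dir * (y - x0))).
  assert (Ht0 : 0 < Rmin d (dir * (y - x0))) by (apply Rmin_pos; [apply cond_pos| lra]).
  assert (Hd0 := cond_pos d).
  set (z := x0 + dir * t).
  assert (Hz : 0 < dir * (z - x0) < dir * (y - x0)).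
  { unfold z, t. destruct Hdir as [-> | ->]; lra. }
  assert (Hzb : Rabs (z - x0) < d).
  { unfold z, t. destruct Hdir as [-> | ->].
    rewrite Rabs_right; lra. rewrite Rabs_left; lra. }
  specialize (Hd z Hzb (proj1 Hz)). change (Rabs (f z - L) < eta) in Hd.
  assert (H1 := Hh z Hz).
  assert (Hyz : 0 < Rabs (y - z) <= Rabs (y - x0)).
  { destruct Hdir as [-> | ->]; split.
    apply Rabs_pos_lt; lra. rewrite !Rabs_right; lra.
    apply Rabs_pos_lt; lra. rewrite !Rabs_left; lra. }
  assert (H2 : Rpower (Rabs (y - z)) al <= Rpower (Rabs (y - x0)) al) by (apply Rle_Rpower_l; lra).
  assert (H3 := Rpower_pos (Rabs (y - z)) al).
  assert (H4 : C * Rpower (Rabs (y - z)) al <= Rabs C * Rpower (Rabs (y - x0)) al).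
  { apply Rle_trans with (Rabs C * Rpower (Rabs (y - z)) al).
    apply Rmult_le_compat_r; [lra | apply Rle_abs]. apply Rmult_le_compat_l; [apply Rabs_pos | auto]. }
  replace (f y - L) with ((f y - f z) + (f z - L)) by ring.
  apply Rle_trans with (1 := Rabs_triang _ _). lra.
Qed.

Lemma within_le x0 (D D' : R -> Prop) : (forall u, D u -> D' u) ->
  filter_le (within D (locally x0)) (within D' (locally x0)).
Proof.
  intros HD P HP. unfold within in *. apply (filter_imp (fun u => D' u -> P u)); auto.
Qed.

Lemma jump_bound al phi g jrho Gam lam p0 p1 k : 0 < al -> p0 < p1 -> p1 < 0 -> 0 < Gam -> 0 < lam ->
  (forall q, exists L1 L2,
      filterlim (fun p => Dp phi q p) (at_right p1) (locally L1) /\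
      filterlim (fun p => Dp phi q p) (at_left p1) (locally L2) /\
      2 * (/ (/ Gam) ^ 3 * L1 - / (/ lam) ^ 3 * L2) - 2 * g * jrho * phi q p1 = 0) ->
  holder al (open_strip p1 0) (Dp phi) -> holder al (open_strip p0 p1) (Dp phi) ->
  (forall q, continuous (fun x => phi x p1) q) ->
  exists K, forall p p', p1 < p < 0 -> p0 < p' < p1 ->
    Rabs (Gam ^ 3 * dk phi k p - lam ^ 3 * dk phi k p' - g * jrho * ck phi k p1)
      <= K * (Rpower (p - p1) al + Rpower (p1 - p') al).
Proof.
  intros Hal Hp01 Hp1 HG Hl Hj HhR HhL Hc1.
  destruct (holder_p al _ _ HhR) as [C1 HC1]. destruct (holder_p al _ _ HhL) as [C2 HC2].
  assert (HG3 : 0 < Gam ^ 3) by (apply pow_lt; lra). assert (Hl3 : 0 < lam ^ 3) by (apply pow_lt; lra).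
  exists (2 * PI * (Gam ^ 3 * Rabs C1 + lam ^ 3 * Rabs C2)).
  intros p p' Hp Hp'.
  assert (ExR : ex_RInt (fun q => Dp phi q p * cos (INR k * q)) (- PI) PI).
  { apply ex_RInt_cont2. intros x. apply (holder_cont_q al (open_strip p1 0) (Dp phi) p); auto;
    try (intros; unfold open_strip; lra). intros; apply cont_cos_k. }
  assert (ExL : ex_RInt (fun q => Dp phi q p' * cos (INR k * q)) (- PI) PI).
  { apply ex_RInt_cont2. intros x. apply (holder_cont_q al (open_strip p0 p1) (Dp phi) p'); auto;
    try (intros; unfold open_strip; lra). intros; apply cont_cos_k. }
  assert (Ex1 : ex_RInt (fun q => phi q p1 * cos (INR k * q)) (- PI) PI).
  { apply ex_RInt_cont2; auto. intros; apply cont_cos_k. }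
  assert (J := is_RInt_comb _ _ _ _ 1 (- (g * jrho)) _ _
     (is_RInt_comb _ _ _ _ (Gam ^ 3) (- lam ^ 3) _ _ (RInt_correct_R _ _ _ ExR) (RInt_correct_R _ _ _ ExL))
     (RInt_correct_R _ _ _ Ex1)).
  unfold dk, ck.
  match goal with |- Rabs ?X <= _ => replace X with
    (1 * (Gam ^ 3 * RInt (fun q => Dp phi q p * cos (INR k * q)) (- PI) PI +
          - lam ^ 3 * RInt (fun q => Dp phi q p' * cos (INR k * q)) (- PI) PI) +
     - (g * jrho) * RInt (fun q => phi q p1 * cos (INR k * q)) (- PI) PI) by ring end.
  rewrite <- (is_RInt_unique_R _ _ _ _ J).
  replace (2 * PI * (Gam ^ 3 * Rabs C1 + lam ^ 3 * Rabs C2) * (Rpower (p - p1) al + Rpower (p1 - p') al))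
    with (2 * PI * ((Gam ^ 3 * Rabs C1 + lam ^ 3 * Rabs C2) * (Rpower (p - p1) al + Rpower (p1 - p') al))) by ring.
  apply abs_RInt_le_R.
  { exists (1 * (Gam ^ 3 * RInt (fun q => Dp phi q p * cos (INR k * q)) (- PI) PI +
          - lam ^ 3 * RInt (fun q => Dp phi q p' * cos (INR k * q)) (- PI) PI) +
     - (g * jrho) * RInt (fun q => phi q p1 * cos (INR k * q)) (- PI) PI). exact J. }
  intros q. destruct (Hj q) as [L1 [L2 [Hr [Hle Heq]]]].
  assert (B1 : Rabs (Dp phi q p - L1) <= Rabs C1 * Rpower (Rabs (p - p1)) al).
  { apply (lim_side (fun y => Dp phi q y) p1 L1 C1 al _ 1 Hal (or_introl eq_refl) eq_refl).
    apply (filterlim_filter_le_1 (F := at_right p1) _ (within_le p1 (fun u => 0 < 1*(u-p1)) (fun u => p1 < u) (fun u Hu => ltac:(lra)))). exact Hr.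
    lra. intros z Hz. apply HC1; unfold open_strip; try lra. }
  assert (B2 : Rabs (Dp phi q p' - L2) <= Rabs C2 * Rpower (Rabs (p' - p1)) al).
  { apply (lim_side (fun y => Dp phi q y) p1 L2 C2 al _ (-1) Hal (or_intror eq_refl) eq_refl).
    apply (filterlim_filter_le_1 (F := at_left p1) _ (within_le p1 (fun u => 0 < -1*(u-p1)) (fun u => u < p1) (fun u Hu => ltac:(lra)))). exact Hle.
    lra. intros z Hz. apply HC2; unfold open_strip; try lra. }
  rewrite (Rabs_right (p - p1)) in B1 by lra. rewrite (Rabs_left (p' - p1)) in B2 by lra.
  replace (- (p' - p1)) with (p1 - p') in B2 by ring.
  assert (E : g * jrho * phi q p1 = Gam ^ 3 * L1 - lam ^ 3 * L2).
  { replace (/ (/ Gam) ^ 3) with (Gam ^ 3) in Heq by (field; lra).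
    replace (/ (/ lam) ^ 3) with (lam ^ 3) in Heq by (field; lra). lra. }
  replace (1 * (Gam ^ 3 * (Dp phi q p * cos (INR k * q)) + - lam ^ 3 * (Dp phi q p' * cos (INR k * q))) +
     - (g * jrho) * (phi q p1 * cos (INR k * q)))
    with ((Gam ^ 3 * (Dp phi q p - L1) - lam ^ 3 * (Dp phi q p' - L2)) * cos (INR k * q)).
  2: { replace (- (g * jrho) * (phi q p1 * cos (INR k * q))) with (- (g * jrho * phi q p1) * cos (INR k * q)) by ring.
       rewrite E. ring. }
  rewrite Rabs_mult. assert (Hc := cos_abs_le (INR k) q). assert (Hc0 := Rabs_pos (cos (INR k * q))).
  set (X := Gam ^ 3 * (Dp phi q p - L1) - lam ^ 3 * (Dp phi q p' - L2)).
  assert (HX : Rabs X <= (Gam ^ 3 * Rabs C1 + lam ^ 3 * Rabs C2) * (Rpower (p - p1) al + Rpower (p1 - p') al)).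
  { unfold X. apply Rle_trans with (Gam ^ 3 * Rabs (Dp phi q p - L1) + lam ^ 3 * Rabs (Dp phi q p' - L2)).
    unfold Rminus at 1. apply Rle_trans with (1 := Rabs_triang _ _). rewrite Rabs_Ropp, !Rabs_mult.
    rewrite !(Rabs_right (_ ^ 3)) by lra. lra.
    assert (R1 := Rpower_pos (p - p1) al). assert (R2 := Rpower_pos (p1 - p') al).
    assert (A1 := Rabs_pos C1). assert (A2 := Rabs_pos C2).
    assert (Gam ^ 3 * Rabs (Dp phi q p - L1) <= Gam ^ 3 * (Rabs C1 * Rpower (p - p1) al)) by (apply Rmult_le_compat_l; lra).
    assert (lam ^ 3 * Rabs (Dp phi q p' - L2) <= lam ^ 3 * (Rabs C2 * Rpower (p1 - p') al)) by (apply Rmult_le_compat_l; lra).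
    assert (0 <= Gam ^ 3 * Rabs C1 * Rpower (p1 - p') al) by (apply Rmult_le_pos; [apply Rmult_le_pos|]; lra).
    assert (0 <= lam ^ 3 * Rabs C2 * Rpower (p - p1) al) by (apply Rmult_le_pos; [apply Rmult_le_pos|]; lra).
    nra. }
  assert (H0 := Rabs_pos X). nra.
Qed.

Lemma jump_limit (d F1 F2 : R -> R) c Gam lam gj p0 p1 al K :
  0 < al -> p0 < p1 -> p1 < 0 -> 0 < Gam -> 0 < lam ->
  (forall p, p1 < p < 0 -> d p = F1 p) -> (forall p, p0 < p < p1 -> d p = F2 p) ->
  continuous F1 p1 -> continuous F2 p1 ->
  (forall p p', p1 < p < 0 -> p0 < p' < p1 ->
     Rabs (Gam ^ 3 * d p - lam ^ 3 * d p' - gj * c) <= K * (Rpower (p - p1) al + Rpower (p1 - p') al)) ->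
  Gam ^ 3 * F1 p1 - lam ^ 3 * F2 p1 = gj * c.
Proof.
  intros Hal Hp01 Hp1 HG Hl H1 H2 C1 C2 HB.
  assert (HG3 : 0 < Gam ^ 3) by (apply pow_lt; lra). assert (Hl3 : 0 < lam ^ 3) by (apply pow_lt; lra).
  set (r := Rmin (- p1) (p1 - p0)).
  assert (Hr1 := Rmin_l (- p1) (p1 - p0)). assert (Hr2 := Rmin_r (- p1) (p1 - p0)).
  assert (Hr : 0 < r) by (unfold r; apply Rmin_pos; lra). fold r in Hr1, Hr2.
  apply Rminus_diag_uniq. apply (approx0 _ p1 (p1 + r) p1); try lra.
  intros eps He.
  destruct (cont_eps F1 p1 C1 (eps / (4 * Gam ^ 3))) as [d1 [Hd1 E1]]. apply Rdiv_lt_0_compat; lra.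
  destruct (cont_eps F2 p1 C2 (eps / (4 * lam ^ 3))) as [d2 [Hd2 E2]]. apply Rdiv_lt_0_compat; lra.
  destruct (Rpower_small al (2 * K) (eps / 2) Hal) as [d3 [Hd3 E3]]. lra.
  exists (Rmin d1 (Rmin d2 d3)). split. repeat apply Rmin_pos; auto.
  intros p Hp Hpd.
  assert (M1 := Rmin_l d1 (Rmin d2 d3)). assert (M2 := Rmin_r d1 (Rmin d2 d3)).
  assert (M3 := Rmin_l d2 d3). assert (M4 := Rmin_r d2 d3).
  rewrite Rabs_right in Hpd by lra.
  set (p' := 2 * p1 - p).
  assert (Hp' : p0 < p' < p1) by (unfold p'; lra).
  assert (A1 := E1 p ltac:(rewrite Rabs_right; lra)).
  assert (A2 := E2 p' ltac:(unfold p'; rewrite Rabs_left; lra)).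
  assert (A3 := E3 (p - p1) ltac:(lra) ltac:(lra)).
  assert (A4 := HB p p' ltac:(lra) Hp').
  replace (p1 - p') with (p - p1) in A4 by (unfold p'; ring).
  rewrite (H1 p) in A4 by lra. rewrite (H2 p') in A4 by lra.
  assert (A5 : K * (Rpower (p - p1) al + Rpower (p - p1) al) <= Rabs (2 * K) * Rpower (p - p1) al).
  { replace (K * (Rpower (p - p1) al + Rpower (p - p1) al)) with ((2 * K) * Rpower (p - p1) al) by ring.
    apply Rmult_le_compat_r. apply Rlt_le, Rpower_pos. apply Rle_abs. }
  replace (Gam ^ 3 * F1 p1 - lam ^ 3 * F2 p1 - gj * c) with
    (Gam ^ 3 * (F1 p1 - F1 p) - lam ^ 3 * (F2 p1 - F2 p') + (Gam ^ 3 * F1 p - lam ^ 3 * F2 p' - gj * c)) by ring.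
  apply Rle_lt_trans with (1 := Rabs_triang _ _).
  assert (B : Rabs (Gam ^ 3 * (F1 p1 - F1 p) - lam ^ 3 * (F2 p1 - F2 p')) < eps / 2).
  { unfold Rminus at 1. apply Rle_lt_trans with (1 := Rabs_triang _ _). rewrite Rabs_Ropp, !Rabs_mult.
    rewrite !(Rabs_right (_ ^ 3)) by lra.
    rewrite <- (Rabs_Ropp (F1 p1 - F1 p)), <- (Rabs_Ropp (F2 p1 - F2 p')).
    replace (- (F1 p1 - F1 p)) with (F1 p - F1 p1) by ring.
    replace (- (F2 p1 - F2 p')) with (F2 p' - F2 p1) by ring.
    assert (Gam ^ 3 * Rabs (F1 p - F1 p1) < Gam ^ 3 * (eps / (4 * Gam ^ 3))) by (apply Rmult_lt_compat_l; lra).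
    assert (lam ^ 3 * Rabs (F2 p' - F2 p1) < lam ^ 3 * (eps / (4 * lam ^ 3))) by (apply Rmult_lt_compat_l; lra).
    replace (Gam ^ 3 * (eps / (4 * Gam ^ 3))) with (eps / 4) in * by (field; lra).
    replace (lam ^ 3 * (eps / (4 * lam ^ 3))) with (eps / 4) in * by (field; lra). lra. }
  lra.
Qed.

Lemma ext_closed (c F : R -> R) a b al K : 0 < al -> a < b ->
  (forall p, a < p < b -> c p = F p) -> (forall x, continuous F x) ->
  (forall p p', a <= p <= b -> a <= p' <= b -> p <> p' -> Rabs (c p - c p') <= K * Rpower (Rabs (p - p')) al) ->
  forall p, a <= p <= b -> c p = F p.
Proof.
  intros Hal Hab HE HF HK p Hp.
  destruct (Rlt_dec a p) as [H1|H1]; [destruct (Rlt_dec p b) as [H2|H2]|].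
  - apply HE; lra.
  - apply (ext_endpoint c F a b p al K); auto. intros p' Hp' Hne. apply HK; lra.
  - apply (ext_endpoint c F a b p al K); auto. intros p' Hp' Hne. apply HK; lra.
Qed.

Lemma cont_hyp_lin A B m k0 x : continuous (fun p => A * cosh (m * p + k0) + B * sinh (m * p + k0)) x.
Proof.
  apply (ex_derive_continuous (fun p => A * cosh (m * p + k0) + B * sinh (m * p + k0))).
  eexists. apply (is_derive_plus (fun p => A * cosh (m * p + k0)) (fun p => B * sinh (m * p + k0))).
  apply is_derive_scal'. apply is_derive_cosh_lin. apply is_derive_scal'. apply is_derive_sinh_lin.
Qed.

Lemma cont_lin A B x : continuous (fun p => A + B * p) x.
Proof. apply (ex_derive_continuous (fun p => A + B * p)). auto_derive; auto. Qed.

Lemma cont_const (A : R) x : continuous (fun _ : R => A) x.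
Proof. apply continuous_const. Qed.

Lemma gj_h_neg Gam lam p0 p1 gj : p0 < p1 -> p1 < 0 -> 0 < Gam -> 0 < lam ->
  gj = Gam ^ 2 * coth (p1 / Gam) - lam ^ 2 * coth ((p1 - p0) / lam) ->
  lam ^ 3 + gj * (p1 - p0) < 0.
Proof.
  intros Hp01 Hp1 HG Hl Hgj. subst gj. unfold coth.
  set (v := (p1 - p0) / lam). assert (Hv : 0 < v) by (unfold v; apply Rdiv_lt_0_compat; lra).
  assert (Hh : p1 - p0 = lam * v) by (unfold v; field; lra).
  assert (S1 : sinh (p1 / Gam) < 0) by (apply sinh_neg_lt; apply Rdiv_neg_pos; lra).
  assert (C1 := cosh_pos (p1 / Gam)). assert (Sv := sinh_pos v Hv). assert (Cv := cosh_pos v).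
  assert (Hx := sinh_le_xcosh v Hv).
  assert (T1 : cosh (p1 / Gam) / sinh (p1 / Gam) < 0).
  { unfold Rdiv. apply Rmult_pos_neg; auto. apply Rinv_lt_0_compat; auto. }
  assert (T2 : 1 <= v * (cosh v / sinh v)).
  { apply Rmult_le_reg_r with (sinh v); auto. rewrite Rmult_1_l.
    replace (v * (cosh v / sinh v) * sinh v) with (v * cosh v) by (field; lra). auto. }
  rewrite Hh.
  replace (lam ^ 3 + (Gam ^ 2 * (cosh (p1 / Gam) / sinh (p1 / Gam)) - lam ^ 2 * (cosh v / sinh v)) * (lam * v))
    with (lam ^ 3 * (1 - v * (cosh v / sinh v)) + (Gam ^ 2 * lam * v) * (cosh (p1 / Gam) / sinh (p1 / Gam))) by ring.
  assert (P1 : 0 < lam ^ 3) by (apply pow_lt; lra).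
  assert (P2 : 0 < Gam ^ 2 * lam * v).
  { assert (0 < Gam ^ 2) by (apply pow_lt; lra). apply Rmult_lt_0_compat; [apply Rmult_lt_0_compat|]; lra. }
  assert (lam ^ 3 * (1 - v * (cosh v / sinh v)) <= 0) by nra.
  assert ((Gam ^ 2 * lam * v) * (cosh (p1 / Gam) / sinh (p1 / Gam)) < 0) by (apply Rmult_pos_neg; lra).
  lra.
Qed.

Lemma mode0 (c d : R -> R) al Gam lam p0 p1 gj K1 K2 :
  0 < al -> p0 < p1 -> p1 < 0 -> 0 < Gam -> 0 < lam ->
  gj = Gam ^ 2 * coth (p1 / Gam) - lam ^ 2 * coth ((p1 - p0) / lam) ->
  (forall p, p1 < p < 0 -> is_derive c p (d p) /\ is_derive d p ((/Gam * INR 0) * (/Gam * INR 0) * c p)) ->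
  (forall p, p0 < p < p1 -> is_derive c p (d p) /\ is_derive d p ((/lam * INR 0) * (/lam * INR 0) * c p)) ->
  (forall p p', p0 <= p <= 0 -> p0 <= p' <= 0 -> p <> p' -> Rabs (c p - c p') <= K1 * Rpower (Rabs (p - p')) al) ->
  c p0 = 0 -> c 0 = c p1 ->
  (forall p p', p1 < p < 0 -> p0 < p' < p1 ->
     Rabs (Gam ^ 3 * d p - lam ^ 3 * d p' - gj * c p1) <= K2 * (Rpower (p - p1) al + Rpower (p1 - p') al)) ->
  forall p, p0 <= p <= 0 -> c p = 0.
Proof.
  intros Hal Hp01 Hp1 HG Hl Hgj HD1 HD2 HK1 Hbot Htop HJ.
  destruct (ode_zero c d p1 0) as [A1 [B1 HE1]]. lra.
  { intros p Hp; apply HD1; auto. }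
  { intros p Hp; destruct (HD1 p Hp) as [_ H]. simpl INR in H. replace ((/ Gam * 0) * (/ Gam * 0) * c p) with 0 in H by ring. auto. }
  destruct (ode_zero c d p0 p1) as [A2 [B2 HE2]]. lra.
  { intros p Hp; apply HD2; auto. }
  { intros p Hp; destruct (HD2 p Hp) as [_ H]. simpl INR in H. replace ((/ lam * 0) * (/ lam * 0) * c p) with 0 in H by ring. auto. }
  assert (X1 : forall p, p1 <= p <= 0 -> c p = A1 + B1 * p).
  { apply (ext_closed c (fun p => A1 + B1 * p) p1 0 al K1); auto; try lra.
    intros p Hp; apply HE1; auto. intros; apply cont_lin. intros; apply HK1; auto; lra. }
  assert (X2 : forall p, p0 <= p <= p1 -> c p = A2 + B2 * p).
  { apply (ext_closed c (fun p => A2 + B2 * p) p0 p1 al K1); auto; try lra.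
    intros p Hp; apply HE2; auto. intros; apply cont_lin. intros; apply HK1; auto; lra. }
  assert (E0 := X1 0 ltac:(lra)). assert (E1 := X1 p1 ltac:(lra)).
  assert (E2 := X2 p0 ltac:(lra)). assert (E3 := X2 p1 ltac:(lra)).
  assert (HB1 : B1 = 0).
  { assert (B1 * p1 = 0) by lra. apply Rmult_integral in H. destruct H; auto. lra. }
  assert (J := jump_limit d (fun _ => B1) (fun _ => B2) (c p1) Gam lam gj p0 p1 al K2 Hal Hp01 Hp1 HG Hl
    (fun p Hp => proj2 (HE1 p Hp)) (fun p Hp => proj2 (HE2 p Hp)) (cont_const _ _) (cont_const _ _) HJ).
  simpl in J.
  assert (Hc1 : c p1 = B2 * (p1 - p0)) by lra.
  assert (HT := gj_h_neg Gam lam p0 p1 gj Hp01 Hp1 HG Hl Hgj).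
  assert (HB2 : B2 = 0).
  { rewrite HB1, Hc1 in J. assert (B2 * (lam ^ 3 + gj * (p1 - p0)) = 0) by lra.
    apply Rmult_integral in H. destruct H; auto. lra. }
  intros p Hp. destruct (Rle_dec p1 p).
  - rewrite X1 by lra. subst. lra.
  - rewrite X2 by lra. subst. lra.
Qed.

Lemma cont_hyp_lin2 A B m k0 x : continuous (fun p => m * (A * sinh (m * p + k0) + B * cosh (m * p + k0))) x.
Proof.
  apply (ex_derive_continuous (fun p => m * (A * sinh (m * p + k0) + B * cosh (m * p + k0)))).
  eexists. apply is_derive_scal'.
  apply (is_derive_plus (fun p => A * sinh (m * p + k0)) (fun p => B * cosh (m * p + k0))).
  apply is_derive_scal'. apply is_derive_sinh_lin. apply is_derive_scal'. apply is_derive_cosh_lin.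
Qed.

Lemma modek_alg Gam lam u v kk B1 B2 c1 gj : 0 < Gam -> 0 < lam -> 0 < u -> 0 < v -> 0 < kk ->
  sinh (kk * u) * cosh u < kk * cosh (kk * u) * sinh u ->
  sinh (kk * v) * cosh v < kk * cosh (kk * v) * sinh v ->
  c1 = - B1 * sinh (kk * u) -> c1 = B2 * sinh (kk * v) ->
  gj = - Gam ^ 2 * (cosh u / sinh u) - lam ^ 2 * (cosh v / sinh v) ->
  Gam ^ 2 * kk * B1 * cosh (kk * u) - lam ^ 2 * kk * B2 * cosh (kk * v) = gj * c1 ->
  c1 = 0.
Proof.
  intros HG Hl Hu Hv Hk Iu Iv HB1 HB2 Hgj HJ.
  assert (su := sinh_pos u Hu). assert (sv := sinh_pos v Hv).
  assert (sku := sinh_pos (kk * u) ltac:(nra)). assert (skv := sinh_pos (kk * v) ltac:(nra)).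
  assert (cu := cosh_pos u). assert (cv := cosh_pos v).
  assert (E1 : B1 = - c1 / sinh (kk * u)) by (rewrite HB1; field; lra).
  assert (E2 : B2 = c1 / sinh (kk * v)) by (rewrite HB2; field; lra).
  rewrite E1, E2, Hgj in HJ.
  set (T := Gam ^ 2 * (kk * cosh (kk * u) / sinh (kk * u) - cosh u / sinh u) +
            lam ^ 2 * (kk * cosh (kk * v) / sinh (kk * v) - cosh v / sinh v)).
  assert (HT : 0 < T).
  { assert (T1 : 0 < kk * cosh (kk * u) / sinh (kk * u) - cosh u / sinh u).
    { replace (kk * cosh (kk * u) / sinh (kk * u) - cosh u / sinh u) with
        ((kk * cosh (kk * u) * sinh u - sinh (kk * u) * cosh u) / (sinh (kk * u) * sinh u)) by (field; lra).
      apply Rdiv_lt_0_compat; nra. }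
    assert (T2 : 0 < kk * cosh (kk * v) / sinh (kk * v) - cosh v / sinh v).
    { replace (kk * cosh (kk * v) / sinh (kk * v) - cosh v / sinh v) with
        ((kk * cosh (kk * v) * sinh v - sinh (kk * v) * cosh v) / (sinh (kk * v) * sinh v)) by (field; lra).
      apply Rdiv_lt_0_compat; nra. }
    assert (0 < Gam ^ 2) by (apply pow_lt; lra). assert (0 < lam ^ 2) by (apply pow_lt; lra).
    unfold T. nra. }
  assert (Z : c1 * T = 0).
  { transitivity ((- Gam ^ 2 * (cosh u / sinh u) - lam ^ 2 * (cosh v / sinh v)) * c1 -
      (Gam ^ 2 * kk * (- c1 / sinh (kk * u)) * cosh (kk * u) - lam ^ 2 * kk * (c1 / sinh (kk * v)) * cosh (kk * v))).
    unfold T. field. repeat split; lra.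
    rewrite HJ. ring. }
  apply Rmult_integral in Z. destruct Z; auto. lra.
Qed.

Lemma modek (c d : R -> R) (k : nat) al Gam lam p0 p1 gj Kh Kj : (1 <= k)%nat ->
  0 < al -> p0 < p1 -> p1 < 0 -> 0 < Gam -> 0 < lam ->
  gj = Gam ^ 2 * coth (p1 / Gam) - lam ^ 2 * coth ((p1 - p0) / lam) ->
  (forall p, p1 < p < 0 -> is_derive c p (d p) /\ is_derive d p ((/Gam * INR k) * (/Gam * INR k) * c p)) ->
  (forall p, p0 < p < p1 -> is_derive c p (d p) /\ is_derive d p ((/lam * INR k) * (/lam * INR k) * c p)) ->
  (forall p p', p0 <= p <= 0 -> p0 <= p' <= 0 -> p <> p' -> Rabs (c p - c p') <= Kh * Rpower (Rabs (p - p')) al) ->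
  c p0 = 0 -> c 0 = 0 ->
  (forall p p', p1 < p < 0 -> p0 < p' < p1 ->
     Rabs (Gam ^ 3 * d p - lam ^ 3 * d p' - gj * c p1) <= Kj * (Rpower (p - p1) al + Rpower (p1 - p') al)) ->
  forall p, p0 <= p <= 0 -> c p = (if Nat.eq_dec k 1 then c p1 * aa Gam lam p0 p1 p else 0).
Proof.
  intros Hk Hal Hp01 Hp1 HG Hl Hgj HD1 HD2 HK1 Hbot Htop HJ.
  set (kk := INR k). assert (Hkk : 1 <= kk) by (apply (le_INR 1); auto).
  set (m1 := / Gam * kk). set (m2 := / lam * kk).
  assert (Hm1 : 0 < m1) by (unfold m1; apply Rmult_lt_0_compat; [apply Rinv_0_lt_compat|]; lra).
  assert (Hm2 : 0 < m2) by (unfold m2; apply Rmult_lt_0_compat; [apply Rinv_0_lt_compat|]; lra).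
  destruct (ode_pos c d m1 0 p1 0) as [A1 [B1 HE1]]; auto.
  { intros p Hp; apply HD1; auto. }
  { intros p Hp; apply HD1; auto. }
  destruct (ode_pos c d m2 (- (m2 * p0)) p0 p1) as [A2 [B2 HE2]]; auto.
  { intros p Hp; apply HD2; auto. }
  { intros p Hp; apply HD2; auto. }
  assert (X1 : forall p, p1 <= p <= 0 -> c p = A1 * cosh (m1 * p + 0) + B1 * sinh (m1 * p + 0)).
  { apply (ext_closed c _ p1 0 al Kh); auto; try lra.
    intros p Hp; apply HE1; auto. intros; apply cont_hyp_lin. intros; apply HK1; auto; lra. }
  assert (X2 : forall p, p0 <= p <= p1 -> c p = A2 * cosh (m2 * p + - (m2 * p0)) + B2 * sinh (m2 * p + - (m2 * p0))).
  { apply (ext_closed c _ p0 p1 al Kh); auto; try lra.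
    intros p Hp; apply HE2; auto. intros; apply cont_hyp_lin. intros; apply HK1; auto; lra. }
  assert (HA1 : A1 = 0).
  { assert (E := X1 0 ltac:(lra)). rewrite Htop in E. replace (m1 * 0 + 0) with 0 in E by ring.
    rewrite cosh_0, sinh_0 in E. lra. }
  assert (HA2 : A2 = 0).
  { assert (E := X2 p0 ltac:(lra)). rewrite Hbot in E. replace (m2 * p0 + - (m2 * p0)) with 0 in E by ring.
    rewrite cosh_0, sinh_0 in E. lra. }
  assert (J := jump_limit d (fun p => m1 * (A1 * sinh (m1 * p + 0) + B1 * cosh (m1 * p + 0)))
    (fun p => m2 * (A2 * sinh (m2 * p + - (m2 * p0)) + B2 * cosh (m2 * p + - (m2 * p0))))
    (c p1) Gam lam gj p0 p1 al Kj Hal Hp01 Hp1 HG Hl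
    (fun p Hp => proj2 (HE1 p Hp)) (fun p Hp => proj2 (HE2 p Hp)) (cont_hyp_lin2 _ _ _ _ _) (cont_hyp_lin2 _ _ _ _ _) HJ).
  simpl in J. rewrite HA1, HA2 in J.
  assert (C1 := X1 p1 ltac:(lra)). assert (C2 := X2 p1 ltac:(lra)). rewrite HA1 in C1. rewrite HA2 in C2.
  set (u := - p1 / Gam). set (v := (p1 - p0) / lam).
  assert (Hu : 0 < u) by (unfold u; apply Rdiv_lt_0_compat; lra).
  assert (Hv : 0 < v) by (unfold v; apply Rdiv_lt_0_compat; lra).
  assert (Eu : m1 * p1 + 0 = - (kk * u)) by (unfold m1, u; field; lra).
  assert (Ev : m2 * p1 + - (m2 * p0) = kk * v) by (unfold m2, v; field; lra).
  rewrite Eu, sinh_opp in C1. rewrite Ev in C2. rewrite Eu, cosh_opp, Ev in J.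
  destruct (Nat.eq_dec k 1) as [Hk1|Hk1].
  - intros p Hp. unfold aa. assert (Hk1' : kk = 1) by (unfold kk; rewrite Hk1; reflexivity).
    destruct (Rle_dec p1 p).
    + rewrite X1, HA1 by lra. unfold K1.
      assert (S1 : sinh (p1 / Gam) < 0) by (apply sinh_neg_lt; apply Rdiv_neg_pos; lra).
      replace (p1 / Gam) with (- (kk * u)) in * by (unfold u; rewrite Hk1'; field; lra).
      rewrite sinh_opp in S1 |- *. rewrite C1.
      replace (m1 * p + 0) with (/ Gam * p + 0) by (unfold m1; rewrite Hk1'; ring).
      field. lra.
    + rewrite X2, HA2 by lra. unfold K2.
      assert (S2 : 0 < sinh ((p1 - p0) / lam)) by (apply sinh_pos; apply Rdiv_lt_0_compat; lra).
      replace ((p1 - p0) / lam) with (kk * v) in * by (unfold v; rewrite Hk1'; ring).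
      rewrite C2.
      replace (m2 * p + - (m2 * p0)) with (/ lam * p + - (p0 / lam)) by (unfold m2; rewrite Hk1'; field; lra).
      field. lra.
  - assert (Hk2 : (2 <= k)%nat) by lia.
    assert (Hc1 : c p1 = 0).
    { apply (modek_alg Gam lam u v kk B1 B2 (c p1) gj); auto; try lra.
      - apply sinh_mul_lt; auto.
      - apply sinh_mul_lt; auto.
      - rewrite Hgj. unfold coth. replace (p1 / Gam) with (- u) by (unfold u; field; lra).
        rewrite sinh_opp, cosh_opp. fold v. field. split; apply Rgt_not_eq, sinh_pos; auto.
      - rewrite <- J. unfold m1, m2. field. lra. }
    assert (SU := sinh_pos (kk * u) ltac:(nra)). assert (SV := sinh_pos (kk * v) ltac:(nra)).
    assert (HB1 : B1 = 0) by nra. assert (HB2 : B2 = 0) by nra.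
    intros p Hp. destruct (Rle_dec p1 p).
    + rewrite X1 by lra. rewrite HA1, HB1. ring.
    + rewrite X2 by lra. rewrite HA2, HB2. ring.
Qed.

Lemma per_nat (f : R -> R) : (forall x, f (x + 2 * PI) = f x) ->
  forall n : nat, forall x, f (x + 2 * PI * INR n) = f x /\ f (x - 2 * PI * INR n) = f x.
Proof.
  intros H n. induction n as [|n IH]; intros x.
  - simpl. replace (x + 2 * PI * 0) with x by ring. replace (x - 2 * PI * 0) with x by ring. auto.
  - rewrite S_INR. split.
    + replace (x + 2 * PI * (INR n + 1)) with ((x + 2 * PI * INR n) + 2 * PI) by ring.
      rewrite H. apply IH.
    + rewrite <- (H (x - 2 * PI * (INR n + 1))).
      replace (x - 2 * PI * (INR n + 1) + 2 * PI) with (x - 2 * PI * INR n) by ring. apply IH.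
Qed.

Lemma per_Z (f : R -> R) : (forall x, f (x + 2 * PI) = f x) ->
  forall z : Z, forall x, f (x + 2 * PI * IZR z) = f x.
Proof.
  intros H z x. destruct (Z_le_gt_dec 0 z) as [Hz|Hz].
  - rewrite <- (Z2Nat.id z) by lia. rewrite <- INR_IZR_INZ. apply per_nat; auto.
  - replace z with (- Z.of_nat (Z.to_nat (- z)))%Z by lia.
    rewrite opp_IZR, <- INR_IZR_INZ.
    replace (x + 2 * PI * - INR (Z.to_nat (- z))) with (x - 2 * PI * INR (Z.to_nat (- z))) by ring.
    apply per_nat; auto.
Qed.

Lemma periodic_zero (f : R -> R) : (forall x, f (x + 2 * PI) = f x) ->
  (forall x, - PI < x < PI -> f x = 0) -> continuous f PI -> forall x, f x = 0.
Proof.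
  intros Hp Hz Hc. assert (HP := PI_RGT_0).
  assert (HPI : f PI = 0).
  { apply (approx0 _ (- PI) PI PI); try lra. intros eps He.
    destruct (cont_eps f PI Hc eps He) as [d [Hd H]]. exists d; split; auto.
    intros p Hp' Hpd. specialize (H p Hpd). rewrite Hz in H by auto.
    rewrite Rminus_0_l, Rabs_Ropp in H. auto. }
  intros x.
  destruct (archimed ((x + PI) / (2 * PI))) as [H1 H2].
  set (z := up ((x + PI) / (2 * PI))) in *.
  set (r := x - 2 * PI * IZR (z - 1)).
  assert (Hr : - PI <= r < PI).
  { unfold r. rewrite minus_IZR.
    assert (E : (x + PI) / (2 * PI) * (2 * PI) = x + PI) by (field; lra).
    split; nra. }
  replace x with (r + 2 * PI * IZR (z - 1)) by (unfold r; ring).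
  rewrite per_Z; auto.
  destruct (Req_dec r (- PI)) as [->|Hne].
  - rewrite <- Hp. replace (- PI + 2 * PI) with PI by ring. auto.
  - apply Hz. lra.
Qed.

Lemma modes al g p0 p1 jrho Gam lam phi (k : nat) : 0 < al < 1 -> p0 < p1 -> p1 < 0 -> 0 < Gam -> 0 < lam ->
  g * jrho = Gam ^ 2 * coth (p1 / Gam) - lam ^ 2 * coth ((p1 - p0) / lam) ->
  in_kernel al g p0 p1 jrho Gam lam phi ->
  forall p, p0 <= p <= 0 -> ck phi k p = (if Nat.eq_dec k 1 then ck phi k p1 * aa Gam lam p0 p1 p else 0).
Proof.
  intros Hal Hp01 Hp1 HG Hl Hgj Hk.
  unfold in_kernel in Hk. cbv zeta in Hk.
  destruct Hk as [[Hper [Hhol [HC2 [Hbot [HC1a HC1b]]]]] [Heq1 [Heq2 [Hjump Htop]]]].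
  assert (Hc : forall p, p0 <= p <= 0 -> forall q, continuous (fun x => phi x p) q).
  { intros p Hp. apply (holder_cont_q al (closed_strip p0 0) phi p); try lra; auto;
    try (intros; unfold closed_strip; lra). }
  assert (Hpr : forall q p, p0 <= p <= 0 -> phi (q + 2 * PI) p = phi q p).
  { intros q p Hp. apply (Hper q p Hp). }
  assert (D1 := layer_deriv al phi p1 0 (/ Gam) k Hal HC1a).
  assert (D1' : forall p, p1 < p < 0 -> is_derive (ck phi k) p (dk phi k p) /\
     is_derive (dk phi k) p ((/ Gam * INR k) * (/ Gam * INR k) * ck phi k p)).
  { apply D1.
    - intros p Hp. exists (p1 + (p - p1) / 2), 0. split; [lra| split; [lra|]].
      apply (HC2 ((p - p1) / 2) ltac:(lra)).
    - intros p Hp; apply Hc; lra.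
    - intros q p Hp; apply Hpr; lra.
    - intros q p Hp; apply Heq1; auto. }
  assert (D2 := layer_deriv al phi p0 p1 (/ lam) k Hal HC1b).
  assert (D2' : forall p, p0 < p < p1 -> is_derive (ck phi k) p (dk phi k p) /\
     is_derive (dk phi k) p ((/ lam * INR k) * (/ lam * INR k) * ck phi k p)).
  { apply D2.
    - intros p Hp. exists p0, (p1 - (p1 - p) / 2). split; [lra| split; [lra|]].
      replace (p1 - (p1 - p) / 2) with (p1 - (p1 - p) / 2) by ring.
      apply (HC2 ((p1 - p) / 2) ltac:(lra)).
    - intros p Hp; apply Hc; lra.
    - intros q p Hp; apply Hpr; lra.
    - intros q p Hp; apply Heq2; auto. }
  destruct (ck_holder al phi k p0 0 ltac:(lra) Hhol) as [KH HKH].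
  assert (HJ := jump_bound al phi g jrho Gam lam p0 p1 k ltac:(lra) Hp01 Hp1 HG Hl Hjump
     (proj2 (proj2 (proj2 HC1a))) (proj2 (proj2 (proj2 HC1b))) (Hc p1 ltac:(lra))).
  destruct HJ as [KJ HKJ].
  assert (Hb := ck_bottom phi k p0 Hbot).
  destruct (ck_top phi k p1 Htop) as [Ht1 Ht0].
  destruct k as [|k'].
  - intros p Hp. simpl. apply (mode0 (ck phi 0) (dk phi 0) al Gam lam p0 p1 (g * jrho) KH KJ); auto; lra.
  - apply (modek (ck phi (S k')) (dk phi (S k')) (S k') al Gam lam p0 p1 (g * jrho) KH KJ); auto; try lra; try lia.
    apply Ht1; lia.
Qed.

Lemma uniq al g p0 p1 jrho Gam lam phi : 0 < al < 1 -> p0 < p1 -> p1 < 0 -> 0 < Gam -> 0 < lam ->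
  g * jrho = Gam ^ 2 * coth (p1 / Gam) - lam ^ 2 * coth ((p1 - p0) / lam) ->
  in_kernel al g p0 p1 jrho Gam lam phi ->
  exists c : R, forall q p, p0 <= p <= 0 -> phi q p = c * phi0 Gam lam p0 p1 q p.
Proof.
  intros Hal Hp01 Hp1 HG Hl Hgj Hk.
  assert (HM := modes al g p0 p1 jrho Gam lam phi).
  assert (Hk' := Hk). unfold in_kernel in Hk'. cbv zeta in Hk'.
  destruct Hk' as [[Hper [Hhol _]] _].
  assert (HP := PI_RGT_0).
  set (beta := ck phi 1 p1 / PI). exists beta.
  intros q p Hp.
  set (A := aa Gam lam p0 p1 p).
  set (f := fun x => phi x p - beta * A * cos x).
  assert (Hcq : forall x, continuous (fun x => phi x p) x).
  { apply (holder_cont_q al (closed_strip p0 0) phi p); try lra; auto;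
    try (intros; unfold closed_strip; lra). }
  assert (Hcf : forall x, continuous f x).
  { intros x. unfold f. apply (continuous_minus (fun x => phi x p) (fun x => beta * A * cos x)); auto.
    apply (ex_derive_continuous (fun x => beta * A * cos x)). auto_derive; auto. }
  assert (Hpf : forall x, f (x + 2 * PI) = f x).
  { intros x. unfold f. rewrite (proj1 (Hper x p Hp)). rewrite cos_plus, cos_2PI, sin_2PI. ring. }
  assert (Hz : forall x, - PI < x < PI -> f x = 0).
  { destruct (holder_bound _ _ _ Hhol) as [M HMb].
    apply (fourier_zero f (M + Rabs (beta * A))); auto.
    - intros x. unfold f. rewrite (proj2 (Hper x p Hp)), cos_neg. reflexivity.
    - intros k. apply is_RInt_unique_R.
      assert (Ex : ex_RInt (fun q => phi q p * cos (INR k * q)) (- PI) PI).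
      { apply ex_RInt_cont2; auto. intros; apply cont_cos_k. }
      assert (J := is_RInt_comb _ _ _ _ 1 (- (beta * A)) _ _ (RInt_correct_R _ _ _ Ex) (is_RInt_coscos k)).
      fold (ck phi k p) in J. rewrite (HM k Hal Hp01 Hp1 HG Hl Hgj Hk p Hp) in J.
      match type of J with is_RInt _ _ _ ?v => assert (V : v = 0) end.
      { destruct (Nat.eq_dec k 1) as [->|]. unfold beta, A. field. lra. ring. }
      rewrite V in J. revert J. apply is_RInt_ext_R. intros x _. unfold f. ring.
    - intros x. unfold f.
      assert (H1 := HMb x p Hp). assert (H2 := COS_bound x).
      apply Rle_trans with (1 := Rabs_triang _ _). rewrite Rabs_Ropp, Rabs_mult.
      assert (Rabs (cos x) <= 1) by (apply Rabs_le; lra).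
      assert (H3 := Rabs_pos (beta * A)). nra. }
  assert (E := periodic_zero f Hpf Hz (Hcf PI) q).
  unfold f in E. unfold phi0. fold A. lra.
Qed.

Theorem lemma3p5 (alpha g ell p0 p1 jrho Gam lam : R) :
  0 < alpha < 1 -> 0 < g -> 0 < ell -> p0 < p1 -> p1 < 0 -> jrho < 0 -> 0 < Gam ->
  Rabs p1 = Gam * ell ->
  g * jrho - Gam ^ 2 * coth (p1 / Gam) < 0 ->
  0 < lam ->
  g * jrho = Gam ^ 2 * coth (p1 / Gam) - lam ^ 2 * coth ((p1 - p0) / lam) ->
  (forall mu, 0 < mu ->
     g * jrho = Gam ^ 2 * coth (p1 / Gam) - mu ^ 2 * coth ((p1 - p0) / mu) -> mu = lam) ->
  exists phi0,
    in_kernel alpha g p0 p1 jrho Gam lam phi0 /\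
    (exists q p, p0 <= p <= 0 /\ phi0 q p <> 0) /\
    (forall phi, in_kernel alpha g p0 p1 jrho Gam lam phi ->
       exists c : R, forall q p, p0 <= p <= 0 -> phi q p = c * phi0 q p).
Proof.
  intros Hal Hg Hell Hp01 Hp1 Hj HG Habs Hneg Hl Hgj Huniq.
  exists (phi0 Gam lam p0 p1). split; [| split].
  - apply phi0_kernel; auto.
  - exists 0, p1. split. lra. unfold phi0. rewrite cos_0, A_p1 by auto. lra.
  - intros phi Hk. apply (uniq alpha g p0 p1 jrho Gam lam phi); auto.
Qed.
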